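(* For every $N$ with $4 \le N \le 10$, there is no multiset $\{d_1,\dots,d_N\}$ of decimal digits with $d_1 \neq 0$ such that, for every permutation $\sigma$ of $\{1,\dots,N\}$, the integer $\sum_{i=1}^{N} d_{\sigma(i)}\,10^{N-i}$ is prime.
   Context: Integers are written in base 10; the integer obtained from the digit sequence $(a_1,\dots,a_N)$ is $\sum_{i=1}^N a_i 10^{N-i}$. *)

(* Defs.v *)
From mathcomp Require Import all_boot all_fingroup.
Set Implicit Arguments. Unset Strict Implicit. Unset Printing Implicit Defensive.

Definition digits_value (N : nat) (a : 'I_N -> nat) : nat :=
  \sum_(i < N) a i * 10 ^ (N - 1 - i).

(* Main.v *)
Require Import Defs.
From mathcomp Require Import all_boot all_fingroup zify.
Set Implicit Arguments. Unset Strict Implicit. Unset Printing Implicit Defensive.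

Definition hval (l : seq nat) : nat := foldl (fun acc x => acc * 10 + x) 0 l.
Definition modval (p : nat) (l : seq nat) : nat :=
  foldl (fun acc x => (acc * 10 + x) %% p) 0 l.
Definition cert (l : seq nat) (p : nat) : bool :=
  [&& 1 < p, p < 1000, head 0 l != 0, 4 <= size l & modval p l == 0].
Definition good (s : seq nat) (lp : seq nat * nat) : bool :=
  perm_eq lp.1 s && cert lp.1 lp.2.
Lemma hval_sum l : hval l = \sum_(0 <= i < size l) nth 0 l i * 10 ^ (size l - 1 - i).
Proof.
elim/last_ind: l => [|s x IH]; first by rewrite big_geq.
rewrite /hval foldl_rcons -/(hval s) IH size_rcons big_nat_recr //=.
rewrite nth_rcons ltnn eqxx.
have -> : (size s).+1 - 1 - size s = 0 by lia.
rewrite expn0 muln1; congr (_ + _).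
rewrite big_distrl /=; apply: eq_big_nat => i /andP [_ Hi].
rewrite nth_rcons Hi -mulnA -expnSr; congr (_ * 10 ^ _); lia.
Qed.

Lemma digits_hval N (a : 'I_N -> nat) :
  digits_value a = hval [seq a i | i <- enum 'I_N].
Proof.
rewrite hval_sum size_map size_enum_ord /digits_value big_mkord.
apply: eq_bigr => i _; by rewrite (nth_map i) ?size_enum_ord // nth_ord_enum.
Qed.

Lemma modval_gen p l a :
  foldl (fun acc x => (acc * 10 + x) %% p) (a %% p) l =
  foldl (fun acc x => acc * 10 + x) a l %% p.
Proof.
elim: l a => [|x l IH] a; first by [].
have E : (a %% p * 10 + x) %% p = (a * 10 + x) %% p by rewrite -modnDml modnMml modnDml.
by rewrite [LHS]/= E IH.
Qed.

Lemma modval_mod p l : modval p l = hval l %% p.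
Proof. by rewrite /modval /hval -modval_gen mod0n. Qed.

Lemma foldl_ge l a : a * 10 ^ size l <= foldl (fun acc x => acc * 10 + x) a l.
Proof.
elim: l a => [|x l IH] a /=; first by rewrite muln1.
apply: leq_trans (IH _); rewrite expnS mulnA leq_mul2r; apply/orP; right.
exact: leq_addr.
Qed.

Lemma cert_np l p : cert l p -> ~~ prime (hval l).
Proof.
case/and5P => p1 p1000 hd sz /eqP md.
apply/negP => pr.
have dv : p %| hval l by rewrite /dvdn -modval_mod md.
have ne : p != 1 by rewrite neq_ltn p1 orbT.
have eqp := (prime_nt_dvdP pr ne dv).
case: l hd sz pr md dv eqp => [|x l] //= hd sz pr md dv eqp.
have ge : 1000 <= hval (x :: l).
  rewrite /hval /= add0n; apply: leq_trans (foldl_ge _ _).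
  apply: leq_trans (_ : 1 * 10 ^ 3 <= _) => //; apply: leq_mul; first by rewrite lt0n.
  by rewrite leq_exp2l.
move: p1000; rewrite eqp ltnNge ge //.
Qed.

Lemma hval0 s : all (fun x => x == 0) s -> hval s = 0.
Proof. rewrite /hval; elim: s => [|x s IH] //= /andP [/eqP -> H]; exact: IH. Qed.

Definition bad (x : nat) : bool := x \in [:: 0; 2; 4; 5; 6; 8].

Definition can (k : nat * nat * nat * nat) : seq nat :=
  let: (a, b, c, e) := k in nseq a 1 ++ nseq b 3 ++ nseq c 7 ++ nseq e 9.

Definition keys (N : nat) : seq (nat * nat * nat * nat) :=
  flatten [seq flatten [seq [seq (a, b, c, N - a - b - c) | c <- iota 0 (N - a - b).+1]
                       | b <- iota 0 (N - a).+1] | a <- iota 0 N.+1].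

Definition allkeys := flatten [seq keys N | N <- iota 4 7].

Definition tabok (tab : seq ((nat * nat * nat * nat) * (seq nat * nat))) : bool :=
  (map fst tab == allkeys) && all (fun t => good (can t.1) t.2) tab.

Lemma hval_ge_cons x s : x * 10 ^ size s <= hval (x :: s).
Proof. exact: foldl_ge. Qed.

Lemma foldl_zeros a s : all (fun y => y == 0) s ->
  foldl (fun acc x => acc * 10 + x) a s = a * 10 ^ size s.
Proof.
elim: s a => [|y s IH] a /=; first by rewrite muln1.
by case/andP => /eqP -> H; rewrite IH // addn0 expnS mulnA.
Qed.

Lemma np_dvd p n : 1 < p -> p < n -> p %| n -> ~~ prime n.
Proof.
move=> p1 pn dv; apply/negP => pr.
have ne : p != 1 by rewrite neq_ltn p1 orbT.
have := prime_nt_dvdP pr ne dv => eqp.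
by move: pn; rewrite eqp ltnn.
Qed.

Lemma bad_case l x : 4 <= size l -> x \in l -> bad x ->
  exists l', perm_eq l' l /\ ~~ prime (hval l').
Proof.
move=> sz xin bx.
have pl := perm_to_rem xin.
have szr : size (rem x l) = (size l).-1 by rewrite size_rem.
have [Hz|] := boolP (all (fun y => y == 0) (rem x l)).
  exists (x :: rem x l); split; first by rewrite perm_sym.
  rewrite /hval /= add0n foldl_zeros // szr.
  have [->|xnz] := eqVneq x 0; first by rewrite mul0n.
  apply: (@np_dvd 2).
  - by [].
  - apply: leq_trans (_ : 1 * 10 ^ 1 <= _) => //; apply: leq_mul; first by rewrite lt0n.
    rewrite leq_exp2l //; lia.
  - apply: dvdn_mull; apply: dvdn_exp => //; lia.
case/allPn => y yin ynz.
set r := rem x l.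
set r' := rem y r.
exists (y :: rcons r' x); split.
  rewrite perm_sym; apply: (perm_trans pl); rewrite perm_sym.
  have h1 : perm_eq (y :: rcons r' x) (x :: y :: r').
    apply/seq.permP => P; rewrite /= -cats1 count_cat /=; lia.
  apply: (perm_trans h1).
  by rewrite perm_cons perm_sym perm_to_rem.
have -> : hval (y :: rcons r' x) = hval (y :: r') * 10 + x.
  by rewrite -rcons_cons /hval foldl_rcons.
have ge := hval_ge_cons y r'.
have hpos : 0 < hval (y :: r').
  apply: leq_trans ge; rewrite muln_gt0 expn_gt0 /= andbT lt0n //.
have x10 : x < 10 by move: bx; rewrite /bad !inE => /or4P [| | |/orP[|/orP[]]] /eqP ->.
apply: (@np_dvd (if x == 5 then 5 else 2)).
- by case: (x == 5).
- case: (x == 5); lia.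
- move: bx; rewrite /bad !inE => /or4P [| | |/orP[|/orP[]]] /eqP -> /=;
  by apply: dvdn_add => //; apply: dvdn_mull.
Qed.

Lemma good_np s lp : good s lp -> exists l, perm_eq l s /\ ~~ prime (hval l).
Proof. by case/andP => H1 H2; exists lp.1; rewrite H1 (cert_np H2). Qed.

Lemma can_perm l : all (fun x => x \in [:: 1; 3; 7; 9]) l ->
  perm_eq (can (count_mem 1 l, count_mem 3 l, count_mem 7 l, count_mem 9 l)) l.
Proof.
move=> H; apply/allP => z _ /=; rewrite !count_cat !count_nseq /=.
have [->|n1] := eqVneq z 1; first by rewrite /= !mul0n mul1n !addn0.
have [->|n3] := eqVneq z 3; first by rewrite /= !mul0n mul1n !addn0 add0n.
have [->|n7] := eqVneq z 7; first by rewrite /= !mul0n mul1n !addn0 !add0n.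
have [->|n9] := eqVneq z 9; first by rewrite /= !mul0n mul1n !add0n.
rewrite ?(eq_sym 1) ?(eq_sym 3) ?(eq_sym 7) ?(eq_sym 9) ?(negbTE n1) ?(negbTE n3) ?(negbTE n7) ?(negbTE n9) /=.
rewrite !mul0n eq_sym; apply/eqP/count_memPn; apply/negP => zl.
by move: (allP H z zl); rewrite !inE (negbTE n1) (negbTE n3) (negbTE n7) (negbTE n9).
Qed.

Lemma keys_complete a b c e : (a, b, c, e) \in keys (a + b + c + e).
Proof.
apply/flattenP; eexists; first by apply/mapP; exists a => //; rewrite mem_iota; lia.
apply/flattenP; eexists; first by apply/mapP; exists b => //; rewrite mem_iota; lia.
apply/mapP; exists c; first by rewrite mem_iota; lia.
congr (_, _); lia.
Qed.

Lemma main_from (N : nat) (hN4 : 4 <= N) (hN10 : N <= 10)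
  (tab : seq ((nat * nat * nat * nat) * (seq nat * nat))) (big : tabok tab) :
  ~ exists d : 'I_N -> nat,
      (forall i, d i < 10) /\
      (exists h0 : 0 < N, d (Ordinal h0) != 0) /\
      (forall s : 'S_N, prime (digits_value (fun i => d (s i)))).
Proof.
case=> d [Hd [_ Hp]].
set l0 := [seq d i | i <- enum 'I_N].
have sz0 : size l0 = N by rewrite size_map size_enum_ord.
have Hex : exists l, perm_eq l l0 /\ ~~ prime (hval l).
  have [|] := boolP (all (fun x => x \in [:: 1; 3; 7; 9]) l0); last first.
    case/allPn => x xin xn; apply: (bad_case (x := x)) => //; first by rewrite sz0.
    move: xin => /mapP [i _ xe]; move: xn; rewrite xe; have := Hd i.
    by case: (d i) => [|[|[|[|[|[|[|[|[|[|n]]]]]]]]]].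
  move=> Hall; have cp := can_perm Hall.
  set k := (_, _, _, _) in cp.
  have kin : k \in allkeys.
    apply/flattenP; exists (keys N); first by apply/mapP; exists N => //; rewrite mem_iota; lia.
    have <- : count_mem 1 l0 + count_mem 3 l0 + count_mem 7 l0 + count_mem 9 l0 = N.
      by rewrite -sz0 -(perm_size cp) /can /= !size_cat !size_nseq; lia.
    exact: keys_complete.
  case/andP: big => /eqP mk /allP ok.
  move: kin; rewrite -mk => /mapP [t tin kt].
  have := ok t tin; rewrite -kt => /good_np [l [pl npl]].
  by exists l; rewrite (perm_trans pl cp).
case: Hex => l [Hperm Hnp].
have Hperm' : perm_eq l [tuple d i | i < N].
  by rewrite (perm_trans Hperm) //= ?val_ord_tuple.
case/tuple_permP: Hperm' => s Hl.
move: (Hp s); rewrite digits_hval.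
have -> : [seq d (s i) | i <- enum 'I_N] = l.
  by rewrite Hl /=; apply: eq_map => i; rewrite tnth_mktuple.
by move/negP: Hnp.
Qed.

Definition table : seq ((nat * nat * nat * nat) * (seq nat * nat)) := [::
((0,0,0,4), ([:: 9; 9; 9; 9], 3));
((0,0,1,3), ([:: 9; 9; 9; 7], 13));
((0,0,2,2), ([:: 7; 7; 9; 9], 11));
((0,0,3,1), ([:: 7; 7; 7; 9], 3));
((0,0,4,0), ([:: 7; 7; 7; 7], 7));
((0,1,0,3), ([:: 3; 9; 9; 9], 3));
((0,1,1,2), ([:: 3; 9; 9; 7], 7));
((0,1,2,1), ([:: 7; 3; 9; 7], 13));
((0,1,3,0), ([:: 3; 7; 7; 7], 3));
((0,2,0,2), ([:: 3; 3; 9; 9], 3));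
((0,2,1,1), ([:: 9; 3; 7; 3], 7));
((0,2,2,0), ([:: 3; 3; 7; 7], 11));
((0,3,0,1), ([:: 3; 3; 3; 9], 3));
((0,3,1,0), ([:: 3; 3; 3; 7], 47));
((0,4,0,0), ([:: 3; 3; 3; 3], 3));
((1,0,0,3), ([:: 9; 9; 1; 9], 7));
((1,0,1,2), ([:: 1; 7; 9; 9], 7));
((1,0,2,1), ([:: 1; 7; 7; 9], 3));
((1,0,3,0), ([:: 7; 7; 7; 1], 19));
((1,1,0,2), ([:: 1; 9; 3; 9], 7));
((1,1,1,1), ([:: 1; 3; 7; 9], 7));
((1,1,2,0), ([:: 1; 3; 7; 7], 3));
((1,2,0,1), ([:: 1; 3; 3; 9], 13));
((1,2,1,0), ([:: 1; 3; 3; 7], 7));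
((1,3,0,0), ([:: 3; 1; 3; 3], 13));
((2,0,0,2), ([:: 1; 1; 9; 9], 11));
((2,0,1,1), ([:: 1; 1; 7; 9], 3));
((2,0,2,0), ([:: 1; 1; 7; 7], 11));
((2,1,0,1), ([:: 1; 3; 9; 1], 13));
((2,1,1,0), ([:: 1; 1; 3; 7], 3));
((2,2,0,0), ([:: 1; 1; 3; 3], 11));
((3,0,0,1), ([:: 1; 1; 1; 9], 3));
((3,0,1,0), ([:: 7; 1; 1; 1], 13));
((3,1,0,0), ([:: 1; 1; 1; 3], 3));
((4,0,0,0), ([:: 1; 1; 1; 1], 11));
((0,0,0,5), ([:: 9; 9; 9; 9; 9], 3));
((0,0,1,4), ([:: 9; 7; 9; 9; 9], 11));
((0,0,2,3), ([:: 9; 7; 7; 9; 9], 13));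
((0,0,3,2), ([:: 7; 7; 7; 9; 9], 3));
((0,0,4,1), ([:: 7; 7; 7; 7; 9], 13));
((0,0,5,0), ([:: 7; 7; 7; 7; 7], 7));
((0,1,0,4), ([:: 3; 9; 9; 9; 9], 3));
((0,1,1,3), ([:: 3; 7; 9; 9; 9], 13));
((0,1,2,2), ([:: 3; 9; 9; 7; 7], 7));
((0,1,3,1), ([:: 3; 7; 7; 7; 9], 3));
((0,1,4,0), ([:: 7; 3; 7; 7; 7], 11));
((0,2,0,3), ([:: 3; 3; 9; 9; 9], 3));
((0,2,1,2), ([:: 3; 3; 9; 7; 9], 11));
((0,2,2,1), ([:: 3; 7; 7; 3; 9], 13));
((0,2,3,0), ([:: 3; 3; 7; 7; 7], 3));
((0,3,0,2), ([:: 3; 3; 3; 9; 9], 3));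
((0,3,1,1), ([:: 3; 3; 3; 9; 7], 7));
((0,3,2,0), ([:: 3; 3; 7; 3; 7], 11));
((0,4,0,1), ([:: 3; 3; 3; 3; 9], 3));
((0,4,1,0), ([:: 3; 3; 7; 3; 3], 7));
((0,5,0,0), ([:: 3; 3; 3; 3; 3], 3));
((1,0,0,4), ([:: 1; 9; 9; 9; 9], 7));
((1,0,1,3), ([:: 1; 9; 7; 9; 9], 13));
((1,0,2,2), ([:: 1; 7; 7; 9; 9], 3));
((1,0,3,1), ([:: 1; 7; 7; 9; 7], 13));
((1,0,4,0), ([:: 7; 7; 7; 1; 7], 23));
((1,1,0,3), ([:: 3; 1; 9; 9; 9], 11));
((1,1,1,2), ([:: 1; 3; 9; 7; 9], 7));
((1,1,2,1), ([:: 1; 3; 7; 7; 9], 3));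
((1,1,3,0), ([:: 1; 7; 7; 7; 3], 7));
((1,2,0,2), ([:: 1; 3; 9; 9; 3], 7));
((1,2,1,1), ([:: 1; 3; 7; 3; 9], 11));
((1,2,2,0), ([:: 1; 3; 3; 7; 7], 3));
((1,3,0,1), ([:: 3; 1; 3; 3; 9], 7));
((1,3,1,0), ([:: 3; 1; 7; 3; 3], 13));
((1,4,0,0), ([:: 3; 3; 3; 1; 3], 7));
((2,0,0,3), ([:: 1; 1; 9; 9; 9], 13));
((2,0,1,2), ([:: 1; 1; 7; 9; 9], 3));
((2,0,2,1), ([:: 1; 1; 9; 7; 7], 7));
((2,0,3,0), ([:: 1; 7; 7; 1; 7], 7));
((2,1,0,2), ([:: 3; 1; 1; 9; 9], 7));
((2,1,1,1), ([:: 1; 1; 3; 7; 9], 3));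
((2,1,2,0), ([:: 1; 1; 7; 3; 7], 11));
((2,2,0,1), ([:: 1; 3; 1; 3; 9], 7));
((2,2,1,0), ([:: 1; 1; 3; 3; 7], 3));
((2,3,0,0), ([:: 1; 1; 3; 3; 3], 7));
((3,0,0,2), ([:: 1; 1; 1; 9; 9], 3));
((3,0,1,1), ([:: 1; 1; 1; 7; 9], 7));
((3,0,2,0), ([:: 1; 7; 1; 7; 1], 7));
((3,1,0,1), ([:: 1; 1; 1; 3; 9], 3));
((3,1,1,0), ([:: 1; 1; 1; 3; 7], 7));
((3,2,0,0), ([:: 1; 1; 1; 3; 3], 3));
((4,0,0,1), ([:: 1; 1; 1; 9; 1], 19));
((4,0,1,0), ([:: 1; 1; 7; 1; 1], 7));
((4,1,0,0), ([:: 1; 3; 1; 1; 1], 7));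
((5,0,0,0), ([:: 1; 1; 1; 1; 1], 41));
((0,0,0,6), ([:: 9; 9; 9; 9; 9; 9], 3));
((0,0,1,5), ([:: 9; 7; 9; 9; 9; 9], 17));
((0,0,2,4), ([:: 7; 7; 9; 9; 9; 9], 11));
((0,0,3,3), ([:: 7; 7; 7; 9; 9; 9], 3));
((0,0,4,2), ([:: 7; 7; 7; 7; 9; 9], 11));
((0,0,5,1), ([:: 9; 7; 7; 7; 7; 7], 43));
((0,0,6,0), ([:: 7; 7; 7; 7; 7; 7], 3));
((0,1,0,5), ([:: 3; 9; 9; 9; 9; 9], 3));
((0,1,1,4), ([:: 3; 9; 7; 9; 9; 9], 7));
((0,1,2,3), ([:: 3; 7; 9; 7; 9; 9], 7));
((0,1,3,2), ([:: 3; 7; 7; 7; 9; 9], 3));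
((0,1,4,1), ([:: 3; 7; 7; 7; 9; 7], 7));
((0,1,5,0), ([:: 3; 7; 7; 7; 7; 7], 19));
((0,2,0,4), ([:: 3; 3; 9; 9; 9; 9], 3));
((0,2,1,3), ([:: 3; 3; 9; 9; 9; 7], 7));
((0,2,2,2), ([:: 3; 3; 7; 7; 9; 9], 7));
((0,2,3,1), ([:: 3; 3; 7; 7; 7; 9], 3));
((0,2,4,0), ([:: 3; 3; 7; 7; 7; 7], 11));
((0,3,0,3), ([:: 3; 3; 3; 9; 9; 9], 3));
((0,3,1,2), ([:: 3; 3; 7; 9; 3; 9], 7));
((0,3,2,1), ([:: 3; 3; 3; 9; 7; 7], 7));
((0,3,3,0), ([:: 3; 3; 3; 7; 7; 7], 3));
((0,4,0,2), ([:: 3; 3; 3; 3; 9; 9], 3));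
((0,4,1,1), ([:: 3; 3; 3; 7; 3; 9], 7));
((0,4,2,0), ([:: 3; 3; 3; 3; 7; 7], 11));
((0,5,0,1), ([:: 3; 3; 3; 3; 3; 9], 3));
((0,5,1,0), ([:: 3; 7; 3; 3; 3; 3], 31));
((0,6,0,0), ([:: 3; 3; 3; 3; 3; 3], 3));
((1,0,0,5), ([:: 9; 9; 9; 9; 9; 1], 17));
((1,0,1,4), ([:: 1; 9; 9; 9; 7; 9], 13));
((1,0,2,3), ([:: 1; 7; 7; 9; 9; 9], 3));
((1,0,3,2), ([:: 1; 7; 9; 9; 7; 7], 7));
((1,0,4,1), ([:: 1; 7; 7; 7; 7; 9], 7));
((1,0,5,0), ([:: 1; 7; 7; 7; 7; 7], 3));
((1,1,0,4), ([:: 1; 9; 3; 9; 9; 9], 13));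
((1,1,1,3), ([:: 1; 3; 9; 7; 9; 9], 11));
((1,1,2,2), ([:: 1; 3; 7; 7; 9; 9], 3));
((1,1,3,1), ([:: 1; 3; 7; 7; 9; 7], 11));
((1,1,4,0), ([:: 1; 7; 7; 7; 3; 7], 7));
((1,2,0,3), ([:: 1; 3; 9; 3; 9; 9], 13));
((1,2,1,2), ([:: 1; 3; 9; 9; 3; 7], 7));
((1,2,2,1), ([:: 1; 3; 3; 7; 7; 9], 3));
((1,2,3,0), ([:: 1; 3; 3; 7; 7; 7], 7));
((1,3,0,2), ([:: 1; 3; 3; 3; 9; 9], 7));
((1,3,1,1), ([:: 1; 3; 3; 3; 9; 7], 11));
((1,3,2,0), ([:: 1; 3; 3; 3; 7; 7], 3));
((1,4,0,1), ([:: 1; 3; 3; 3; 9; 3], 13));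
((1,4,1,0), ([:: 1; 3; 7; 3; 3; 3], 7));
((1,5,0,0), ([:: 3; 3; 3; 1; 3; 3], 131));
((2,0,0,4), ([:: 1; 1; 9; 9; 9; 9], 11));
((2,0,1,3), ([:: 1; 1; 7; 9; 9; 9], 3));
((2,0,2,2), ([:: 1; 1; 7; 7; 9; 9], 11));
((2,0,3,1), ([:: 1; 1; 9; 7; 7; 7], 7));
((2,0,4,0), ([:: 1; 1; 7; 7; 7; 7], 3));
((2,1,0,3), ([:: 1; 1; 9; 3; 9; 9], 7));
((2,1,1,2), ([:: 1; 1; 3; 7; 9; 9], 3));
((2,1,2,1), ([:: 1; 1; 7; 3; 9; 7], 7));
((2,1,3,0), ([:: 1; 1; 7; 3; 7; 7], 13));
((2,2,0,2), ([:: 1; 1; 3; 3; 9; 9], 11));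
((2,2,1,1), ([:: 1; 1; 3; 3; 7; 9], 3));
((2,2,2,0), ([:: 1; 1; 3; 3; 7; 7], 11));
((2,3,0,1), ([:: 1; 1; 3; 3; 9; 3], 7));
((2,3,1,0), ([:: 1; 1; 3; 3; 3; 7], 3));
((2,4,0,0), ([:: 1; 1; 3; 3; 3; 3], 11));
((3,0,0,3), ([:: 1; 1; 1; 9; 9; 9], 3));
((3,0,1,2), ([:: 1; 1; 1; 9; 7; 9], 7));
((3,0,2,1), ([:: 1; 1; 1; 7; 9; 7], 7));
((3,0,3,0), ([:: 1; 1; 1; 7; 7; 7], 3));
((3,1,0,2), ([:: 1; 1; 1; 3; 9; 9], 3));
((3,1,1,1), ([:: 1; 1; 1; 3; 9; 7], 11));
((3,1,2,0), ([:: 1; 1; 1; 3; 7; 7], 7));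
((3,2,0,1), ([:: 1; 1; 1; 3; 3; 9], 3));
((3,2,1,0), ([:: 1; 1; 7; 3; 1; 3], 7));
((3,3,0,0), ([:: 1; 1; 1; 3; 3; 3], 3));
((4,0,0,2), ([:: 1; 1; 1; 1; 9; 9], 11));
((4,0,1,1), ([:: 1; 1; 1; 9; 1; 7], 13));
((4,0,2,0), ([:: 1; 1; 1; 1; 7; 7], 3));
((4,1,0,1), ([:: 1; 1; 1; 1; 3; 9], 7));
((4,1,1,0), ([:: 1; 1; 1; 1; 3; 7], 13));
((4,2,0,0), ([:: 1; 1; 1; 1; 3; 3], 11));
((5,0,0,1), ([:: 1; 1; 1; 9; 1; 1], 17));
((5,0,1,0), ([:: 1; 1; 1; 1; 1; 7], 3));
((5,1,0,0), ([:: 1; 1; 1; 1; 3; 1], 19));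
((6,0,0,0), ([:: 1; 1; 1; 1; 1; 1], 3));
((0,0,0,7), ([:: 9; 9; 9; 9; 9; 9; 9], 3));
((0,0,1,6), ([:: 7; 9; 9; 9; 9; 9; 9], 7));
((0,0,2,5), ([:: 7; 9; 9; 9; 9; 7; 9], 13));
((0,0,3,4), ([:: 7; 7; 7; 9; 9; 9; 9], 3));
((0,0,4,3), ([:: 7; 7; 9; 7; 9; 7; 9], 7));
((0,0,5,2), ([:: 7; 7; 7; 7; 9; 7; 9], 11));
((0,0,6,1), ([:: 7; 7; 7; 7; 7; 7; 9], 3));
((0,0,7,0), ([:: 7; 7; 7; 7; 7; 7; 7], 7));
((0,1,0,6), ([:: 3; 9; 9; 9; 9; 9; 9], 3));
((0,1,1,5), ([:: 3; 7; 9; 9; 9; 9; 9], 7));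
((0,1,2,4), ([:: 3; 9; 7; 9; 9; 9; 7], 7));
((0,1,3,3), ([:: 3; 7; 7; 7; 9; 9; 9], 3));
((0,1,4,2), ([:: 3; 7; 7; 9; 7; 9; 7], 7));
((0,1,5,1), ([:: 3; 7; 7; 7; 9; 7; 7], 7));
((0,1,6,0), ([:: 3; 7; 7; 7; 7; 7; 7], 3));
((0,2,0,5), ([:: 3; 3; 9; 9; 9; 9; 9], 3));
((0,2,1,4), ([:: 3; 3; 7; 9; 9; 9; 9], 7));
((0,2,2,3), ([:: 3; 3; 9; 7; 9; 7; 9], 13));
((0,2,3,2), ([:: 3; 3; 7; 7; 7; 9; 9], 3));
((0,2,4,1), ([:: 3; 7; 3; 7; 7; 9; 7], 7));
((0,2,5,0), ([:: 3; 3; 7; 7; 7; 7; 7], 13));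
((0,3,0,4), ([:: 3; 3; 3; 9; 9; 9; 9], 3));
((0,3,1,3), ([:: 3; 3; 3; 7; 9; 9; 9], 7));
((0,3,2,2), ([:: 3; 3; 3; 7; 9; 9; 7], 13));
((0,3,3,1), ([:: 3; 3; 3; 7; 7; 7; 9], 3));
((0,3,4,0), ([:: 3; 3; 7; 3; 7; 7; 7], 11));
((0,4,0,3), ([:: 3; 3; 3; 3; 9; 9; 9], 3));
((0,4,1,2), ([:: 3; 3; 3; 3; 7; 9; 9], 7));
((0,4,2,1), ([:: 3; 3; 3; 7; 3; 9; 7], 7));
((0,4,3,0), ([:: 3; 3; 3; 3; 7; 7; 7], 3));
((0,5,0,2), ([:: 3; 3; 3; 3; 3; 9; 9], 3));
((0,5,1,1), ([:: 3; 3; 3; 3; 3; 7; 9], 7));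
((0,5,2,0), ([:: 3; 3; 3; 3; 7; 3; 7], 11));
((0,6,0,1), ([:: 3; 3; 3; 3; 3; 3; 9], 3));
((0,6,1,0), ([:: 3; 3; 3; 3; 3; 3; 7], 7));
((0,7,0,0), ([:: 3; 3; 3; 3; 3; 3; 3], 3));
((1,0,0,6), ([:: 9; 9; 9; 9; 1; 9; 9], 7));
((1,0,1,5), ([:: 1; 9; 7; 9; 9; 9; 9], 7));
((1,0,2,4), ([:: 1; 7; 7; 9; 9; 9; 9], 3));
((1,0,3,3), ([:: 1; 7; 7; 9; 7; 9; 9], 7));
((1,0,4,2), ([:: 1; 7; 7; 7; 9; 7; 9], 7));
((1,0,5,1), ([:: 1; 7; 7; 7; 7; 7; 9], 3));
((1,0,6,0), ([:: 7; 7; 7; 1; 7; 7; 7], 13));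
((1,1,0,5), ([:: 1; 9; 9; 3; 9; 9; 9], 7));
((1,1,1,4), ([:: 1; 3; 9; 9; 9; 7; 9], 7));
((1,1,2,3), ([:: 1; 3; 7; 7; 9; 9; 9], 3));
((1,1,3,2), ([:: 1; 3; 9; 7; 9; 7; 7], 7));
((1,1,4,1), ([:: 1; 3; 7; 7; 7; 7; 9], 13));
((1,1,5,0), ([:: 1; 3; 7; 7; 7; 7; 7], 3));
((1,2,0,4), ([:: 1; 3; 9; 9; 9; 9; 3], 7));
((1,2,1,3), ([:: 1; 3; 3; 7; 9; 9; 9], 13));
((1,2,2,2), ([:: 1; 3; 3; 7; 7; 9; 9], 3));
((1,2,3,1), ([:: 1; 3; 7; 3; 7; 7; 9], 11));
((1,2,4,0), ([:: 1; 3; 3; 7; 7; 7; 7], 7));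
((1,3,0,3), ([:: 1; 3; 9; 3; 3; 9; 9], 7));
((1,3,1,2), ([:: 1; 3; 3; 3; 9; 9; 7], 7));
((1,3,2,1), ([:: 1; 3; 3; 3; 7; 7; 9], 3));
((1,3,3,0), ([:: 1; 3; 7; 7; 3; 3; 7], 13));
((1,4,0,2), ([:: 1; 3; 3; 9; 3; 9; 3], 11));
((1,4,1,1), ([:: 1; 3; 3; 3; 3; 9; 7], 13));
((1,4,2,0), ([:: 1; 3; 3; 3; 3; 7; 7], 3));
((1,5,0,1), ([:: 1; 3; 3; 3; 3; 3; 9], 7));
((1,5,1,0), ([:: 1; 3; 7; 3; 3; 3; 3], 13));
((1,6,0,0), ([:: 3; 1; 3; 3; 3; 3; 3], 7));
((2,0,0,5), ([:: 1; 9; 9; 9; 9; 9; 1], 7));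
((2,0,1,4), ([:: 1; 1; 7; 9; 9; 9; 9], 3));
((2,0,2,3), ([:: 1; 1; 7; 9; 9; 9; 7], 7));
((2,0,3,2), ([:: 1; 1; 7; 7; 7; 9; 9], 7));
((2,0,4,1), ([:: 1; 1; 7; 7; 7; 7; 9], 3));
((2,0,5,0), ([:: 1; 7; 7; 1; 7; 7; 7], 7));
((2,1,0,4), ([:: 1; 1; 3; 9; 9; 9; 9], 7));
((2,1,1,3), ([:: 1; 1; 3; 7; 9; 9; 9], 3));
((2,1,2,2), ([:: 1; 1; 3; 7; 7; 9; 9], 13));
((2,1,3,1), ([:: 1; 1; 7; 3; 9; 7; 7], 7));
((2,1,4,0), ([:: 1; 1; 3; 7; 7; 7; 7], 3));
((2,2,0,3), ([:: 1; 1; 9; 9; 3; 9; 3], 13));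
((2,2,1,2), ([:: 1; 1; 3; 3; 7; 9; 9], 3));
((2,2,2,1), ([:: 1; 1; 3; 3; 7; 9; 7], 7));
((2,2,3,0), ([:: 1; 1; 3; 7; 7; 7; 3], 7));
((2,3,0,2), ([:: 1; 1; 3; 3; 9; 9; 3], 7));
((2,3,1,1), ([:: 1; 1; 3; 3; 3; 7; 9], 3));
((2,3,2,0), ([:: 1; 1; 3; 3; 3; 7; 7], 7));
((2,4,0,1), ([:: 1; 1; 3; 9; 3; 3; 3], 13));
((2,4,1,0), ([:: 1; 1; 3; 3; 3; 3; 7], 3));
((2,5,0,0), ([:: 1; 3; 1; 3; 3; 3; 3], 7));
((3,0,0,4), ([:: 1; 1; 1; 9; 9; 9; 9], 3));
((3,0,1,3), ([:: 1; 1; 1; 9; 9; 7; 9], 7));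
((3,0,2,2), ([:: 1; 1; 1; 9; 7; 9; 7], 7));
((3,0,3,1), ([:: 1; 1; 1; 7; 7; 7; 9], 3));
((3,0,4,0), ([:: 1; 1; 7; 7; 7; 7; 1], 7));
((3,1,0,3), ([:: 1; 1; 1; 3; 9; 9; 9], 3));
((3,1,1,2), ([:: 1; 1; 1; 9; 9; 3; 7], 7));
((3,1,2,1), ([:: 1; 1; 1; 7; 7; 3; 9], 7));
((3,1,3,0), ([:: 1; 1; 1; 3; 7; 7; 7], 3));
((3,2,0,2), ([:: 1; 1; 1; 3; 3; 9; 9], 3));
((3,2,1,1), ([:: 1; 1; 1; 3; 7; 3; 9], 11));
((3,2,2,0), ([:: 1; 1; 1; 7; 3; 3; 7], 13));
((3,3,0,1), ([:: 1; 1; 1; 3; 3; 3; 9], 3));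
((3,3,1,0), ([:: 1; 1; 1; 7; 3; 3; 3], 7));
((3,4,0,0), ([:: 1; 1; 1; 3; 3; 3; 3], 3));
((4,0,0,3), ([:: 1; 1; 1; 1; 9; 9; 9], 7));
((4,0,1,2), ([:: 1; 1; 1; 1; 7; 9; 9], 13));
((4,0,2,1), ([:: 1; 1; 1; 1; 7; 7; 9], 3));
((4,0,3,0), ([:: 1; 1; 7; 1; 1; 7; 7], 7));
((4,1,0,2), ([:: 1; 1; 1; 9; 1; 3; 9], 7));
((4,1,1,1), ([:: 1; 1; 1; 1; 3; 9; 7], 7));
((4,1,2,0), ([:: 1; 1; 1; 1; 3; 7; 7], 3));
((4,2,0,1), ([:: 1; 1; 1; 3; 9; 3; 1], 7));
((4,2,1,0), ([:: 1; 1; 1; 1; 7; 3; 3], 7));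
((4,3,0,0), ([:: 1; 1; 1; 3; 1; 3; 3], 7));
((5,0,0,2), ([:: 1; 1; 1; 9; 9; 1; 1], 13));
((5,0,1,1), ([:: 1; 1; 1; 1; 1; 7; 9], 3));
((5,0,2,0), ([:: 1; 1; 1; 7; 1; 7; 1], 11));
((5,1,0,1), ([:: 1; 1; 1; 1; 3; 1; 9], 11));
((5,1,1,0), ([:: 1; 1; 1; 1; 1; 3; 7], 3));
((5,2,0,0), ([:: 1; 1; 1; 1; 3; 1; 3], 7));
((6,0,0,1), ([:: 1; 1; 1; 1; 1; 1; 9], 3));
((6,0,1,0), ([:: 1; 1; 1; 1; 1; 1; 7], 7));
((6,1,0,0), ([:: 1; 1; 1; 1; 1; 1; 3], 3));
((7,0,0,0), ([:: 1; 1; 1; 1; 1; 1; 1], 239));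
((0,0,0,8), ([:: 9; 9; 9; 9; 9; 9; 9; 9], 3));
((0,0,1,7), ([:: 9; 9; 7; 9; 9; 9; 9; 9], 13));
((0,0,2,6), ([:: 7; 7; 9; 9; 9; 9; 9; 9], 7));
((0,0,3,5), ([:: 7; 7; 7; 9; 9; 9; 9; 9], 3));
((0,0,4,4), ([:: 7; 7; 7; 7; 9; 9; 9; 9], 11));
((0,0,5,3), ([:: 7; 7; 7; 7; 7; 9; 9; 9], 13));
((0,0,6,2), ([:: 7; 7; 7; 7; 7; 7; 9; 9], 3));
((0,0,7,1), ([:: 7; 7; 7; 7; 9; 7; 7; 7], 17));
((0,0,8,0), ([:: 7; 7; 7; 7; 7; 7; 7; 7], 7));
((0,1,0,7), ([:: 3; 9; 9; 9; 9; 9; 9; 9], 3));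
((0,1,1,6), ([:: 3; 9; 9; 9; 9; 7; 9; 9], 7));
((0,1,2,5), ([:: 3; 7; 9; 9; 7; 9; 9; 9], 13));
((0,1,3,4), ([:: 3; 7; 7; 7; 9; 9; 9; 9], 3));
((0,1,4,3), ([:: 3; 7; 7; 7; 7; 9; 9; 9], 7));
((0,1,5,2), ([:: 3; 7; 7; 7; 9; 7; 9; 7], 11));
((0,1,6,1), ([:: 3; 7; 7; 7; 7; 7; 7; 9], 3));
((0,1,7,0), ([:: 7; 7; 7; 3; 7; 7; 7; 7], 13));
((0,2,0,6), ([:: 3; 3; 9; 9; 9; 9; 9; 9], 3));
((0,2,1,5), ([:: 3; 3; 9; 9; 7; 9; 9; 9], 7));
((0,2,2,4), ([:: 3; 3; 7; 7; 9; 9; 9; 9], 11));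
((0,2,3,3), ([:: 3; 3; 7; 7; 7; 9; 9; 9], 3));
((0,2,4,2), ([:: 3; 3; 7; 7; 7; 7; 9; 9], 11));
((0,2,5,1), ([:: 3; 3; 7; 7; 7; 7; 7; 9], 7));
((0,2,6,0), ([:: 3; 3; 7; 7; 7; 7; 7; 7], 3));
((0,3,0,5), ([:: 3; 3; 3; 9; 9; 9; 9; 9], 3));
((0,3,1,4), ([:: 3; 3; 9; 3; 9; 9; 9; 7], 7));
((0,3,2,3), ([:: 3; 3; 3; 7; 9; 9; 9; 7], 7));
((0,3,3,2), ([:: 3; 3; 3; 7; 7; 7; 9; 9], 3));
((0,3,4,1), ([:: 3; 3; 3; 9; 7; 7; 7; 7], 7));
((0,3,5,0), ([:: 3; 3; 7; 7; 7; 7; 3; 7], 7));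
((0,4,0,4), ([:: 3; 3; 3; 3; 9; 9; 9; 9], 3));
((0,4,1,3), ([:: 3; 3; 3; 9; 3; 9; 9; 7], 7));
((0,4,2,2), ([:: 3; 3; 3; 3; 7; 7; 9; 9], 11));
((0,4,3,1), ([:: 3; 3; 3; 3; 7; 7; 7; 9], 3));
((0,4,4,0), ([:: 3; 3; 3; 3; 7; 7; 7; 7], 11));
((0,5,0,3), ([:: 3; 3; 3; 3; 3; 9; 9; 9], 3));
((0,5,1,2), ([:: 3; 3; 3; 3; 3; 9; 7; 9], 7));
((0,5,2,1), ([:: 3; 3; 3; 3; 3; 7; 9; 7], 7));
((0,5,3,0), ([:: 3; 3; 3; 3; 3; 7; 7; 7], 3));
((0,6,0,2), ([:: 3; 3; 3; 3; 3; 3; 9; 9], 3));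
((0,6,1,1), ([:: 3; 3; 3; 3; 3; 9; 3; 7], 7));
((0,6,2,0), ([:: 3; 3; 3; 3; 3; 3; 7; 7], 7));
((0,7,0,1), ([:: 3; 3; 3; 3; 3; 3; 3; 9], 3));
((0,7,1,0), ([:: 3; 3; 3; 7; 3; 3; 3; 3], 7));
((0,8,0,0), ([:: 3; 3; 3; 3; 3; 3; 3; 3], 3));
((1,0,0,7), ([:: 9; 1; 9; 9; 9; 9; 9; 9], 7));
((1,0,1,6), ([:: 1; 9; 9; 7; 9; 9; 9; 9], 13));
((1,0,2,5), ([:: 1; 7; 7; 9; 9; 9; 9; 9], 3));
((1,0,3,4), ([:: 1; 7; 9; 7; 7; 9; 9; 9], 13));
((1,0,4,3), ([:: 1; 7; 7; 7; 9; 9; 7; 9], 7));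
((1,0,5,2), ([:: 1; 7; 7; 7; 7; 7; 9; 9], 3));
((1,0,6,1), ([:: 1; 7; 7; 7; 7; 9; 7; 7], 7));
((1,0,7,0), ([:: 7; 7; 7; 7; 7; 7; 7; 1], 17));
((1,1,0,6), ([:: 1; 3; 9; 9; 9; 9; 9; 9], 13));
((1,1,1,5), ([:: 1; 3; 9; 7; 9; 9; 9; 9], 11));
((1,1,2,4), ([:: 1; 3; 7; 7; 9; 9; 9; 9], 3));
((1,1,3,3), ([:: 1; 3; 7; 7; 9; 7; 9; 9], 11));
((1,1,4,2), ([:: 1; 3; 7; 7; 7; 7; 9; 9], 7));
((1,1,5,1), ([:: 1; 3; 7; 7; 7; 7; 7; 9], 3));
((1,1,6,0), ([:: 1; 3; 7; 7; 7; 7; 7; 7], 13));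
((1,2,0,5), ([:: 1; 3; 9; 9; 9; 9; 9; 3], 7));
((1,2,1,4), ([:: 1; 3; 3; 9; 9; 7; 9; 9], 7));
((1,2,2,3), ([:: 1; 3; 3; 7; 7; 9; 9; 9], 3));
((1,2,3,2), ([:: 1; 3; 3; 7; 9; 7; 7; 9], 7));
((1,2,4,1), ([:: 1; 3; 7; 3; 7; 7; 7; 9], 11));
((1,2,5,0), ([:: 1; 3; 3; 7; 7; 7; 7; 7], 3));
((1,3,0,4), ([:: 1; 3; 3; 9; 9; 3; 9; 9], 13));
((1,3,1,3), ([:: 1; 3; 3; 3; 9; 7; 9; 9], 11));
((1,3,2,2), ([:: 1; 3; 3; 3; 7; 7; 9; 9], 3));
((1,3,3,1), ([:: 1; 3; 3; 3; 7; 7; 7; 9], 7));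
((1,3,4,0), ([:: 1; 3; 3; 7; 7; 3; 7; 7], 13));
((1,4,0,3), ([:: 1; 3; 3; 3; 3; 9; 9; 9], 7));
((1,4,1,2), ([:: 1; 3; 3; 3; 9; 7; 3; 9], 7));
((1,4,2,1), ([:: 1; 3; 3; 3; 3; 7; 7; 9], 3));
((1,4,3,0), ([:: 1; 3; 3; 3; 7; 7; 3; 7], 7));
((1,5,0,2), ([:: 1; 3; 3; 3; 9; 3; 3; 9], 13));
((1,5,1,1), ([:: 1; 3; 3; 3; 3; 3; 9; 7], 7));
((1,5,2,0), ([:: 1; 3; 3; 3; 3; 3; 7; 7], 3));
((1,6,0,1), ([:: 1; 3; 3; 3; 9; 3; 3; 3], 7));
((1,6,1,0), ([:: 1; 3; 3; 3; 3; 7; 3; 3], 7));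
((1,7,0,0), ([:: 1; 3; 3; 3; 3; 3; 3; 3], 13));
((2,0,0,6), ([:: 1; 1; 9; 9; 9; 9; 9; 9], 11));
((2,0,1,5), ([:: 1; 1; 7; 9; 9; 9; 9; 9], 3));
((2,0,2,4), ([:: 1; 1; 7; 7; 9; 9; 9; 9], 7));
((2,0,3,3), ([:: 1; 1; 7; 9; 7; 7; 9; 9], 13));
((2,0,4,2), ([:: 1; 1; 7; 7; 7; 7; 9; 9], 3));
((2,0,5,1), ([:: 1; 1; 7; 7; 7; 7; 7; 9], 13));
((2,0,6,0), ([:: 1; 1; 7; 7; 7; 7; 7; 7], 11));
((2,1,0,5), ([:: 1; 1; 3; 9; 9; 9; 9; 9], 13));
((2,1,1,4), ([:: 1; 1; 3; 7; 9; 9; 9; 9], 3));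
((2,1,2,3), ([:: 1; 1; 3; 7; 9; 9; 7; 9], 13));
((2,1,3,2), ([:: 1; 1; 3; 7; 9; 7; 9; 7], 11));
((2,1,4,1), ([:: 1; 1; 3; 7; 7; 7; 7; 9], 3));
((2,1,5,0), ([:: 1; 1; 7; 7; 7; 7; 7; 3], 7));
((2,2,0,4), ([:: 1; 1; 3; 3; 9; 9; 9; 9], 11));
((2,2,1,3), ([:: 1; 1; 3; 3; 7; 9; 9; 9], 3));
((2,2,2,2), ([:: 1; 1; 3; 3; 7; 7; 9; 9], 11));
((2,2,3,1), ([:: 1; 1; 3; 3; 7; 9; 7; 7], 7));
((2,2,4,0), ([:: 1; 1; 3; 3; 7; 7; 7; 7], 3));
((2,3,0,3), ([:: 1; 1; 3; 3; 9; 9; 3; 9], 13));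
((2,3,1,2), ([:: 1; 1; 3; 3; 3; 7; 9; 9], 3));
((2,3,2,1), ([:: 1; 1; 3; 3; 7; 7; 3; 9], 7));
((2,3,3,0), ([:: 1; 1; 3; 3; 3; 7; 7; 7], 7));
((2,4,0,2), ([:: 1; 1; 3; 3; 3; 3; 9; 9], 7));
((2,4,1,1), ([:: 1; 1; 3; 3; 3; 3; 7; 9], 3));
((2,4,2,0), ([:: 1; 1; 3; 3; 3; 3; 7; 7], 11));
((2,5,0,1), ([:: 1; 1; 3; 3; 3; 9; 3; 3], 13));
((2,5,1,0), ([:: 1; 1; 3; 3; 3; 3; 3; 7], 3));
((2,6,0,0), ([:: 1; 1; 3; 3; 3; 3; 3; 3], 11));
((3,0,0,5), ([:: 1; 1; 1; 9; 9; 9; 9; 9], 3));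
((3,0,1,4), ([:: 1; 1; 1; 9; 9; 7; 9; 9], 13));
((3,0,2,3), ([:: 1; 1; 1; 7; 7; 9; 9; 9], 7));
((3,0,3,2), ([:: 1; 1; 1; 7; 7; 7; 9; 9], 3));
((3,0,4,1), ([:: 1; 1; 1; 7; 9; 7; 7; 7], 7));
((3,0,5,0), ([:: 1; 1; 1; 7; 7; 7; 7; 7], 13));
((3,1,0,4), ([:: 1; 1; 1; 3; 9; 9; 9; 9], 3));
((3,1,1,3), ([:: 1; 1; 1; 3; 9; 7; 9; 9], 11));
((3,1,2,2), ([:: 1; 1; 1; 3; 7; 9; 9; 7], 13));
((3,1,3,1), ([:: 1; 1; 1; 3; 7; 7; 7; 9], 3));
((3,1,4,0), ([:: 1; 1; 1; 3; 7; 7; 7; 7], 7));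
((3,2,0,3), ([:: 1; 1; 1; 3; 3; 9; 9; 9], 3));
((3,2,1,2), ([:: 1; 1; 1; 3; 3; 9; 9; 7], 7));
((3,2,2,1), ([:: 1; 1; 1; 3; 7; 3; 7; 9], 11));
((3,2,3,0), ([:: 1; 1; 1; 3; 3; 7; 7; 7], 3));
((3,3,0,2), ([:: 1; 1; 1; 3; 3; 3; 9; 9], 3));
((3,3,1,1), ([:: 1; 1; 1; 3; 3; 3; 9; 7], 11));
((3,3,2,0), ([:: 1; 1; 1; 3; 3; 7; 7; 3], 7));
((3,4,0,1), ([:: 1; 1; 1; 3; 3; 3; 3; 9], 3));
((3,4,1,0), ([:: 1; 1; 1; 3; 3; 7; 3; 3], 13));
((3,5,0,0), ([:: 1; 1; 1; 3; 3; 3; 3; 3], 3));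
((4,0,0,4), ([:: 1; 1; 1; 1; 9; 9; 9; 9], 11));
((4,0,1,3), ([:: 1; 1; 1; 1; 9; 9; 7; 9], 13));
((4,0,2,2), ([:: 1; 1; 1; 1; 7; 7; 9; 9], 3));
((4,0,3,1), ([:: 1; 1; 1; 1; 7; 9; 7; 7], 13));
((4,0,4,0), ([:: 1; 1; 1; 1; 7; 7; 7; 7], 11));
((4,1,0,3), ([:: 1; 1; 1; 1; 3; 9; 9; 9], 13));
((4,1,1,2), ([:: 1; 1; 1; 1; 7; 9; 3; 9], 7));
((4,1,2,1), ([:: 1; 1; 1; 1; 3; 7; 7; 9], 3));
((4,1,3,0), ([:: 1; 1; 1; 7; 1; 3; 7; 7], 7));
((4,2,0,2), ([:: 1; 1; 1; 1; 3; 3; 9; 9], 11));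
((4,2,1,1), ([:: 1; 1; 1; 1; 3; 7; 3; 9], 7));
((4,2,2,0), ([:: 1; 1; 1; 1; 3; 3; 7; 7], 3));
((4,3,0,1), ([:: 1; 1; 1; 3; 1; 3; 9; 3], 7));
((4,3,1,0), ([:: 1; 1; 1; 3; 1; 3; 3; 7], 7));
((4,4,0,0), ([:: 1; 1; 1; 1; 3; 3; 3; 3], 7));
((5,0,0,3), ([:: 1; 1; 1; 1; 9; 1; 9; 9], 7));
((5,0,1,2), ([:: 1; 1; 1; 1; 1; 7; 9; 9], 3));
((5,0,2,1), ([:: 1; 1; 1; 1; 1; 7; 7; 9], 7));
((5,0,3,0), ([:: 1; 1; 1; 1; 7; 7; 1; 7], 13));
((5,1,0,2), ([:: 1; 1; 1; 1; 1; 3; 9; 9], 13));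
((5,1,1,1), ([:: 1; 1; 1; 1; 1; 3; 7; 9], 3));
((5,1,2,0), ([:: 1; 1; 1; 1; 1; 7; 3; 7], 7));
((5,2,0,1), ([:: 1; 1; 1; 1; 1; 9; 3; 3], 7));
((5,2,1,0), ([:: 1; 1; 1; 1; 1; 3; 3; 7], 3));
((5,3,0,0), ([:: 1; 1; 1; 3; 1; 1; 3; 3], 13));
((6,0,0,2), ([:: 1; 1; 1; 1; 1; 1; 9; 9], 3));
((6,0,1,1), ([:: 1; 1; 1; 1; 1; 9; 7; 1], 13));
((6,0,2,0), ([:: 1; 1; 1; 1; 1; 1; 7; 7], 7));
((6,1,0,1), ([:: 1; 1; 1; 1; 1; 1; 3; 9], 3));
((6,1,1,0), ([:: 1; 1; 1; 1; 1; 3; 1; 7], 7));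
((6,2,0,0), ([:: 1; 1; 1; 1; 1; 1; 3; 3], 3));
((7,0,0,1), ([:: 1; 1; 1; 1; 1; 1; 9; 1], 7));
((7,0,1,0), ([:: 1; 1; 1; 1; 1; 7; 1; 1], 13));
((7,1,0,0), ([:: 1; 1; 1; 1; 1; 1; 1; 3], 13));
((8,0,0,0), ([:: 1; 1; 1; 1; 1; 1; 1; 1], 11));
((0,0,0,9), ([:: 9; 9; 9; 9; 9; 9; 9; 9; 9], 3));
((0,0,1,8), ([:: 9; 7; 9; 9; 9; 9; 9; 9; 9], 11));
((0,0,2,7), ([:: 7; 9; 9; 9; 7; 9; 9; 9; 9], 7));
((0,0,3,6), ([:: 7; 7; 7; 9; 9; 9; 9; 9; 9], 3));
((0,0,4,5), ([:: 7; 7; 9; 7; 9; 9; 9; 7; 9], 7));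
((0,0,5,4), ([:: 7; 7; 7; 7; 9; 7; 9; 9; 9], 11));
((0,0,6,3), ([:: 7; 7; 7; 7; 7; 7; 9; 9; 9], 3));
((0,0,7,2), ([:: 7; 7; 7; 7; 7; 7; 9; 7; 9], 11));
((0,0,8,1), ([:: 7; 7; 9; 7; 7; 7; 7; 7; 7], 17));
((0,0,9,0), ([:: 7; 7; 7; 7; 7; 7; 7; 7; 7], 3));
((0,1,0,8), ([:: 3; 9; 9; 9; 9; 9; 9; 9; 9], 3));
((0,1,1,7), ([:: 7; 9; 3; 9; 9; 9; 9; 9; 9], 13));
((0,1,2,6), ([:: 3; 7; 7; 9; 9; 9; 9; 9; 9], 13));
((0,1,3,5), ([:: 3; 7; 7; 7; 9; 9; 9; 9; 9], 3));
((0,1,4,4), ([:: 3; 7; 7; 7; 9; 9; 7; 9; 9], 13));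
((0,1,5,3), ([:: 3; 7; 7; 7; 7; 9; 9; 9; 7], 7));
((0,1,6,2), ([:: 3; 7; 7; 7; 7; 7; 7; 9; 9], 3));
((0,1,7,1), ([:: 3; 7; 7; 7; 9; 7; 7; 7; 7], 7));
((0,1,8,0), ([:: 3; 7; 7; 7; 7; 7; 7; 7; 7], 13));
((0,2,0,7), ([:: 3; 3; 9; 9; 9; 9; 9; 9; 9], 3));
((0,2,1,6), ([:: 3; 3; 9; 7; 9; 9; 9; 9; 9], 7));
((0,2,2,5), ([:: 3; 3; 7; 9; 7; 9; 9; 9; 9], 7));
((0,2,3,4), ([:: 3; 3; 7; 7; 7; 9; 9; 9; 9], 3));
((0,2,4,3), ([:: 3; 3; 7; 7; 7; 7; 9; 9; 9], 13));
((0,2,5,2), ([:: 3; 3; 7; 7; 7; 7; 9; 7; 9], 7));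
((0,2,6,1), ([:: 3; 3; 7; 7; 7; 7; 7; 7; 9], 3));
((0,2,7,0), ([:: 3; 7; 7; 3; 7; 7; 7; 7; 7], 7));
((0,3,0,6), ([:: 3; 3; 3; 9; 9; 9; 9; 9; 9], 3));
((0,3,1,5), ([:: 3; 3; 3; 7; 9; 9; 9; 9; 9], 13));
((0,3,2,4), ([:: 3; 3; 3; 7; 7; 9; 9; 9; 9], 7));
((0,3,3,3), ([:: 3; 3; 3; 7; 7; 7; 9; 9; 9], 3));
((0,3,4,2), ([:: 3; 3; 3; 7; 7; 7; 9; 9; 7], 7));
((0,3,5,1), ([:: 3; 3; 3; 7; 7; 7; 9; 7; 7], 13));
((0,3,6,0), ([:: 3; 3; 3; 7; 7; 7; 7; 7; 7], 3));
((0,4,0,5), ([:: 3; 3; 3; 3; 9; 9; 9; 9; 9], 3));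
((0,4,1,4), ([:: 3; 3; 3; 3; 9; 7; 9; 9; 9], 11));
((0,4,2,3), ([:: 3; 3; 3; 3; 9; 7; 7; 9; 9], 7));
((0,4,3,2), ([:: 3; 3; 3; 3; 7; 7; 7; 9; 9], 3));
((0,4,4,1), ([:: 3; 3; 3; 3; 7; 7; 7; 7; 9], 7));
((0,4,5,0), ([:: 3; 3; 3; 7; 7; 7; 7; 7; 3], 7));
((0,5,0,4), ([:: 3; 3; 3; 3; 3; 9; 9; 9; 9], 3));
((0,5,1,3), ([:: 3; 3; 3; 3; 3; 9; 7; 9; 9], 13));
((0,5,2,2), ([:: 3; 3; 3; 3; 3; 7; 9; 7; 9], 13));
((0,5,3,1), ([:: 3; 3; 3; 3; 3; 7; 7; 7; 9], 3));
((0,5,4,0), ([:: 3; 3; 3; 3; 7; 3; 7; 7; 7], 11));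
((0,6,0,3), ([:: 3; 3; 3; 3; 3; 3; 9; 9; 9], 3));
((0,6,1,2), ([:: 3; 3; 3; 3; 3; 3; 9; 7; 9], 11));
((0,6,2,1), ([:: 3; 3; 3; 3; 3; 7; 7; 3; 9], 7));
((0,6,3,0), ([:: 3; 3; 3; 3; 3; 3; 7; 7; 7], 3));
((0,7,0,2), ([:: 3; 3; 3; 3; 3; 3; 3; 9; 9], 3));
((0,7,1,1), ([:: 3; 3; 3; 3; 3; 3; 7; 9; 3], 13));
((0,7,2,0), ([:: 3; 3; 3; 3; 3; 3; 3; 7; 7], 13));
((0,8,0,1), ([:: 3; 3; 3; 3; 3; 3; 3; 3; 9], 3));
((0,8,1,0), ([:: 3; 3; 3; 3; 3; 7; 3; 3; 3], 7));
((0,9,0,0), ([:: 3; 3; 3; 3; 3; 3; 3; 3; 3], 3));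
((1,0,0,8), ([:: 9; 9; 9; 1; 9; 9; 9; 9; 9], 7));
((1,0,1,7), ([:: 1; 9; 9; 7; 9; 9; 9; 9; 9], 7));
((1,0,2,6), ([:: 1; 7; 7; 9; 9; 9; 9; 9; 9], 3));
((1,0,3,5), ([:: 1; 7; 7; 7; 9; 9; 9; 9; 9], 13));
((1,0,4,4), ([:: 1; 7; 7; 7; 9; 9; 9; 7; 9], 7));
((1,0,5,3), ([:: 1; 7; 7; 7; 7; 7; 9; 9; 9], 3));
((1,0,6,2), ([:: 1; 7; 7; 7; 7; 9; 7; 9; 7], 13));
((1,0,7,1), ([:: 1; 7; 7; 7; 7; 7; 9; 7; 7], 13));
((1,0,8,0), ([:: 1; 7; 7; 7; 7; 7; 7; 7; 7], 3));
((1,1,0,7), ([:: 1; 9; 9; 9; 3; 9; 9; 9; 9], 7));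
((1,1,1,6), ([:: 1; 3; 9; 9; 9; 9; 9; 7; 9], 7));
((1,1,2,5), ([:: 1; 3; 7; 7; 9; 9; 9; 9; 9], 3));
((1,1,3,4), ([:: 1; 3; 7; 7; 7; 9; 9; 9; 9], 7));
((1,1,4,3), ([:: 1; 3; 7; 7; 9; 7; 9; 7; 9], 11));
((1,1,5,2), ([:: 1; 3; 7; 7; 7; 7; 7; 9; 9], 3));
((1,1,6,1), ([:: 1; 3; 7; 7; 9; 7; 7; 7; 7], 13));
((1,1,7,0), ([:: 1; 7; 7; 7; 3; 7; 7; 7; 7], 7));
((1,2,0,6), ([:: 1; 3; 3; 9; 9; 9; 9; 9; 9], 7));
((1,2,1,5), ([:: 1; 3; 7; 3; 9; 9; 9; 9; 9], 11));
((1,2,2,4), ([:: 1; 3; 3; 7; 7; 9; 9; 9; 9], 3));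
((1,2,3,3), ([:: 1; 3; 3; 7; 7; 9; 9; 9; 7], 13));
((1,2,4,2), ([:: 1; 3; 3; 7; 7; 9; 7; 7; 9], 7));
((1,2,5,1), ([:: 1; 3; 3; 7; 7; 7; 7; 7; 9], 3));
((1,2,6,0), ([:: 1; 3; 3; 7; 7; 7; 7; 7; 7], 7));
((1,3,0,5), ([:: 1; 3; 9; 3; 9; 9; 9; 3; 9], 7));
((1,3,1,4), ([:: 1; 3; 3; 3; 9; 7; 9; 9; 9], 7));
((1,3,2,3), ([:: 1; 3; 3; 3; 7; 7; 9; 9; 9], 3));
((1,3,3,2), ([:: 1; 3; 3; 3; 7; 7; 9; 7; 9], 7));
((1,3,4,1), ([:: 1; 3; 3; 3; 7; 7; 7; 9; 7], 7));
((1,3,5,0), ([:: 1; 3; 3; 3; 7; 7; 7; 7; 7], 3));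
((1,4,0,4), ([:: 1; 3; 3; 3; 3; 9; 9; 9; 9], 13));
((1,4,1,3), ([:: 1; 3; 3; 3; 3; 9; 9; 9; 7], 7));
((1,4,2,2), ([:: 1; 3; 3; 3; 3; 7; 7; 9; 9], 3));
((1,4,3,1), ([:: 1; 3; 3; 3; 7; 3; 7; 7; 9], 7));
((1,4,4,0), ([:: 1; 3; 3; 3; 7; 7; 3; 7; 7], 7));
((1,5,0,3), ([:: 1; 3; 3; 3; 9; 3; 9; 3; 9], 7));
((1,5,1,2), ([:: 1; 3; 3; 3; 3; 7; 3; 9; 9], 13));
((1,5,2,1), ([:: 1; 3; 3; 3; 3; 3; 7; 7; 9], 3));
((1,5,3,0), ([:: 1; 3; 3; 3; 3; 7; 7; 3; 7], 13));
((1,6,0,2), ([:: 1; 3; 3; 3; 3; 3; 9; 9; 3], 13));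
((1,6,1,1), ([:: 1; 3; 3; 3; 3; 3; 7; 3; 9], 7));
((1,6,2,0), ([:: 1; 3; 3; 3; 3; 3; 3; 7; 7], 3));
((1,7,0,1), ([:: 3; 1; 3; 3; 3; 3; 3; 3; 9], 11));
((1,7,1,0), ([:: 1; 3; 3; 3; 3; 3; 7; 3; 3], 13));
((1,8,0,0), ([:: 1; 3; 3; 3; 3; 3; 3; 3; 3], 7));
((2,0,0,7), ([:: 1; 1; 9; 9; 9; 9; 9; 9; 9], 7));
((2,0,1,6), ([:: 1; 1; 7; 9; 9; 9; 9; 9; 9], 3));
((2,0,2,5), ([:: 1; 1; 7; 9; 9; 7; 9; 9; 9], 7));
((2,0,3,4), ([:: 1; 1; 7; 7; 9; 7; 9; 9; 9], 11));
((2,0,4,3), ([:: 1; 1; 7; 7; 7; 7; 9; 9; 9], 3));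
((2,0,5,2), ([:: 1; 1; 7; 7; 7; 7; 9; 7; 9], 11));
((2,0,6,1), ([:: 1; 1; 7; 7; 7; 7; 7; 7; 9], 7));
((2,0,7,0), ([:: 1; 1; 7; 7; 7; 7; 7; 7; 7], 3));
((2,1,0,6), ([:: 1; 1; 9; 9; 9; 9; 3; 9; 9], 13));
((2,1,1,5), ([:: 1; 1; 3; 7; 9; 9; 9; 9; 9], 3));
((2,1,2,4), ([:: 1; 1; 3; 7; 9; 7; 9; 9; 9], 7));
((2,1,3,3), ([:: 1; 1; 3; 7; 7; 9; 7; 9; 9], 7));
((2,1,4,2), ([:: 1; 1; 3; 7; 7; 7; 7; 9; 9], 3));
((2,1,5,1), ([:: 1; 1; 3; 7; 7; 7; 7; 9; 7], 7));
((2,1,6,0), ([:: 1; 1; 7; 3; 7; 7; 7; 7; 7], 11));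
((2,2,0,5), ([:: 1; 1; 3; 9; 9; 3; 9; 9; 9], 7));
((2,2,1,4), ([:: 1; 1; 3; 3; 7; 9; 9; 9; 9], 3));
((2,2,2,3), ([:: 1; 1; 3; 3; 7; 7; 9; 9; 9], 7));
((2,2,3,2), ([:: 1; 1; 3; 3; 7; 7; 9; 7; 9], 11));
((2,2,4,1), ([:: 1; 1; 3; 3; 7; 7; 7; 7; 9], 3));
((2,2,5,0), ([:: 1; 1; 3; 7; 7; 3; 7; 7; 7], 13));
((2,3,0,4), ([:: 1; 1; 3; 3; 9; 9; 9; 9; 3], 7));
((2,3,1,3), ([:: 1; 1; 3; 3; 3; 7; 9; 9; 9], 3));
((2,3,2,2), ([:: 1; 1; 3; 3; 3; 9; 7; 7; 9], 7));
((2,3,3,1), ([:: 1; 1; 3; 3; 7; 7; 3; 9; 7], 7));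
((2,3,4,0), ([:: 1; 1; 3; 3; 3; 7; 7; 7; 7], 3));
((2,4,0,3), ([:: 1; 1; 3; 3; 3; 9; 9; 9; 3], 13));
((2,4,1,2), ([:: 1; 1; 3; 3; 3; 3; 7; 9; 9], 3));
((2,4,2,1), ([:: 1; 1; 3; 3; 3; 3; 7; 7; 9], 13));
((2,4,3,0), ([:: 1; 1; 3; 3; 7; 3; 3; 7; 7], 13));
((2,5,0,2), ([:: 1; 1; 3; 3; 3; 9; 9; 3; 3], 7));
((2,5,1,1), ([:: 1; 1; 3; 3; 3; 3; 3; 7; 9], 3));
((2,5,2,0), ([:: 1; 1; 3; 3; 3; 3; 7; 3; 7], 11));
((2,6,0,1), ([:: 1; 1; 3; 3; 3; 3; 3; 3; 9], 7));
((2,6,1,0), ([:: 1; 1; 3; 3; 3; 3; 3; 3; 7], 3));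
((2,7,0,0), ([:: 3; 1; 3; 3; 3; 1; 3; 3; 3], 7));
((3,0,0,6), ([:: 1; 1; 1; 9; 9; 9; 9; 9; 9], 3));
((3,0,1,5), ([:: 1; 1; 1; 9; 9; 9; 9; 7; 9], 7));
((3,0,2,4), ([:: 1; 1; 1; 9; 7; 7; 9; 9; 9], 7));
((3,0,3,3), ([:: 1; 1; 1; 7; 7; 7; 9; 9; 9], 3));
((3,0,4,2), ([:: 1; 1; 1; 7; 7; 7; 7; 9; 9], 7));
((3,0,5,1), ([:: 1; 1; 1; 7; 9; 7; 7; 7; 7], 7));
((3,0,6,0), ([:: 1; 1; 1; 7; 7; 7; 7; 7; 7], 3));
((3,1,0,5), ([:: 1; 1; 1; 3; 9; 9; 9; 9; 9], 3));
((3,1,1,4), ([:: 1; 1; 1; 3; 9; 9; 7; 9; 9], 7));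
((3,1,2,3), ([:: 1; 1; 1; 3; 9; 7; 9; 7; 9], 7));
((3,1,3,2), ([:: 1; 1; 1; 3; 7; 7; 7; 9; 9], 3));
((3,1,4,1), ([:: 1; 1; 1; 7; 3; 7; 9; 7; 7], 13));
((3,1,5,0), ([:: 1; 1; 1; 3; 7; 7; 7; 7; 7], 7));
((3,2,0,4), ([:: 1; 1; 1; 3; 3; 9; 9; 9; 9], 3));
((3,2,1,3), ([:: 1; 1; 1; 3; 7; 3; 9; 9; 9], 11));
((3,2,2,2), ([:: 1; 1; 1; 3; 3; 9; 9; 7; 7], 7));
((3,2,3,1), ([:: 1; 1; 1; 3; 3; 7; 7; 7; 9], 3));
((3,2,4,0), ([:: 1; 1; 1; 3; 7; 7; 7; 7; 3], 13));
((3,3,0,3), ([:: 1; 1; 1; 3; 3; 3; 9; 9; 9], 3));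
((3,3,1,2), ([:: 1; 1; 1; 3; 3; 7; 9; 9; 3], 13));
((3,3,2,1), ([:: 1; 1; 1; 3; 3; 7; 7; 9; 3], 7));
((3,3,3,0), ([:: 1; 1; 1; 3; 3; 3; 7; 7; 7], 3));
((3,4,0,2), ([:: 1; 1; 1; 3; 3; 3; 3; 9; 9], 3));
((3,4,1,1), ([:: 1; 1; 1; 3; 3; 3; 3; 9; 7], 7));
((3,4,2,0), ([:: 1; 1; 1; 3; 3; 7; 3; 7; 3], 7));
((3,5,0,1), ([:: 1; 1; 1; 3; 3; 3; 3; 3; 9], 3));
((3,5,1,0), ([:: 1; 1; 1; 3; 3; 3; 7; 3; 3], 7));
((3,6,0,0), ([:: 1; 1; 1; 3; 3; 3; 3; 3; 3], 3));
((4,0,0,5), ([:: 1; 1; 1; 9; 9; 1; 9; 9; 9], 7));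
((4,0,1,4), ([:: 1; 1; 1; 1; 7; 9; 9; 9; 9], 7));
((4,0,2,3), ([:: 1; 1; 1; 1; 7; 7; 9; 9; 9], 3));
((4,0,3,2), ([:: 1; 1; 1; 1; 7; 7; 9; 7; 9], 11));
((4,0,4,1), ([:: 1; 1; 1; 7; 1; 7; 9; 7; 7], 7));
((4,0,5,0), ([:: 1; 1; 1; 1; 7; 7; 7; 7; 7], 3));
((4,1,0,4), ([:: 1; 1; 1; 1; 9; 3; 9; 9; 9], 7));
((4,1,1,3), ([:: 1; 1; 1; 1; 3; 7; 9; 9; 9], 7));
((4,1,2,2), ([:: 1; 1; 1; 1; 3; 7; 7; 9; 9], 3));
((4,1,3,1), ([:: 1; 1; 1; 1; 3; 9; 7; 7; 7], 7));
((4,1,4,0), ([:: 1; 1; 1; 1; 7; 3; 7; 7; 7], 11));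
((4,2,0,3), ([:: 1; 1; 1; 1; 3; 9; 3; 9; 9], 7));
((4,2,1,2), ([:: 1; 1; 1; 1; 3; 3; 7; 9; 9], 7));
((4,2,2,1), ([:: 1; 1; 1; 1; 3; 3; 7; 7; 9], 3));
((4,2,3,0), ([:: 1; 1; 1; 1; 3; 7; 3; 7; 7], 13));
((4,3,0,2), ([:: 1; 1; 1; 1; 3; 3; 3; 9; 9], 13));
((4,3,1,1), ([:: 1; 1; 1; 1; 3; 3; 3; 7; 9], 7));
((4,3,2,0), ([:: 1; 1; 1; 1; 3; 3; 3; 7; 7], 3));
((4,4,0,1), ([:: 1; 1; 1; 1; 3; 3; 3; 9; 3], 7));
((4,4,1,0), ([:: 1; 1; 1; 1; 3; 3; 3; 3; 7], 7));
((4,5,0,0), ([:: 1; 1; 1; 3; 3; 3; 3; 1; 3], 7));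
((5,0,0,4), ([:: 1; 1; 1; 1; 9; 9; 9; 9; 1], 7));
((5,0,1,3), ([:: 1; 1; 1; 1; 1; 7; 9; 9; 9], 3));
((5,0,2,2), ([:: 1; 1; 1; 1; 1; 7; 7; 9; 9], 13));
((5,0,3,1), ([:: 1; 1; 1; 1; 1; 7; 7; 9; 7], 7));
((5,0,4,0), ([:: 1; 1; 1; 1; 1; 7; 7; 7; 7], 3));
((5,1,0,3), ([:: 1; 1; 1; 1; 1; 9; 9; 3; 9], 7));
((5,1,1,2), ([:: 1; 1; 1; 1; 1; 3; 7; 9; 9], 3));
((5,1,2,1), ([:: 1; 1; 1; 1; 1; 3; 7; 7; 9], 7));
((5,1,3,0), ([:: 1; 1; 1; 1; 1; 7; 3; 7; 7], 7));
((5,2,0,2), ([:: 1; 1; 1; 1; 1; 9; 3; 9; 3], 7));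
((5,2,1,1), ([:: 1; 1; 1; 1; 1; 3; 3; 7; 9], 3));
((5,2,2,0), ([:: 1; 1; 1; 1; 1; 3; 7; 3; 7], 7));
((5,3,0,1), ([:: 1; 1; 1; 1; 1; 3; 9; 3; 3], 7));
((5,3,1,0), ([:: 1; 1; 1; 1; 1; 3; 3; 3; 7], 3));
((5,4,0,0), ([:: 1; 1; 1; 3; 1; 1; 3; 3; 3], 7));
((6,0,0,3), ([:: 1; 1; 1; 1; 1; 1; 9; 9; 9], 3));
((6,0,1,2), ([:: 1; 1; 1; 1; 1; 1; 9; 7; 9], 11));
((6,0,2,1), ([:: 1; 1; 1; 1; 1; 9; 1; 7; 7], 13));
((6,0,3,0), ([:: 1; 1; 1; 1; 1; 1; 7; 7; 7], 3));
((6,1,0,2), ([:: 1; 1; 1; 1; 1; 1; 3; 9; 9], 3));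
((6,1,1,1), ([:: 1; 1; 1; 1; 1; 1; 7; 9; 3], 13));
((6,1,2,0), ([:: 1; 1; 1; 1; 1; 1; 3; 7; 7], 13));
((6,2,0,1), ([:: 1; 1; 1; 1; 1; 1; 3; 3; 9], 3));
((6,2,1,0), ([:: 1; 1; 1; 1; 1; 3; 3; 1; 7], 7));
((6,3,0,0), ([:: 1; 1; 1; 1; 1; 1; 3; 3; 3], 3));
((7,0,0,2), ([:: 1; 1; 1; 1; 1; 9; 9; 1; 1], 7));
((7,0,1,1), ([:: 1; 1; 1; 1; 1; 1; 7; 9; 1], 7));
((7,0,2,0), ([:: 1; 1; 1; 1; 1; 1; 1; 7; 7], 3));
((7,1,0,1), ([:: 1; 1; 1; 1; 1; 1; 3; 1; 9], 11));
((7,1,1,0), ([:: 1; 1; 1; 1; 1; 1; 3; 7; 1], 7));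
((7,2,0,0), ([:: 1; 1; 1; 1; 1; 1; 1; 3; 3], 7));
((8,0,0,1), ([:: 1; 1; 1; 1; 1; 1; 1; 1; 9], 7));
((8,0,1,0), ([:: 1; 1; 1; 1; 1; 1; 1; 1; 7], 3));
((8,1,0,0), ([:: 1; 1; 1; 1; 3; 1; 1; 1; 1], 7));
((9,0,0,0), ([:: 1; 1; 1; 1; 1; 1; 1; 1; 1], 3));
((0,0,0,10), ([:: 9; 9; 9; 9; 9; 9; 9; 9; 9; 9], 3));
((0,0,1,9), ([:: 9; 9; 9; 7; 9; 9; 9; 9; 9; 9], 13));
((0,0,2,8), ([:: 7; 7; 9; 9; 9; 9; 9; 9; 9; 9], 11));
((0,0,3,7), ([:: 7; 7; 7; 9; 9; 9; 9; 9; 9; 9], 3));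
((0,0,4,6), ([:: 7; 7; 7; 7; 9; 9; 9; 9; 9; 9], 7));
((0,0,5,5), ([:: 7; 7; 7; 9; 7; 9; 9; 9; 7; 9], 7));
((0,0,6,4), ([:: 7; 7; 7; 7; 7; 7; 9; 9; 9; 9], 3));
((0,0,7,3), ([:: 7; 7; 7; 7; 7; 7; 9; 9; 9; 7], 13));
((0,0,8,2), ([:: 7; 7; 7; 7; 7; 7; 7; 7; 9; 9], 11));
((0,0,9,1), ([:: 7; 7; 7; 7; 7; 7; 7; 7; 7; 9], 3));
((0,0,10,0), ([:: 7; 7; 7; 7; 7; 7; 7; 7; 7; 7], 7));
((0,1,0,9), ([:: 3; 9; 9; 9; 9; 9; 9; 9; 9; 9], 3));
((0,1,1,8), ([:: 3; 9; 9; 7; 9; 9; 9; 9; 9; 9], 7));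
((0,1,2,7), ([:: 3; 7; 9; 9; 9; 9; 7; 9; 9; 9], 7));
((0,1,3,6), ([:: 3; 7; 7; 7; 9; 9; 9; 9; 9; 9], 3));
((0,1,4,5), ([:: 3; 7; 7; 7; 9; 9; 9; 7; 9; 9], 7));
((0,1,5,4), ([:: 3; 7; 7; 7; 7; 7; 9; 9; 9; 9], 7));
((0,1,6,3), ([:: 3; 7; 7; 7; 7; 7; 7; 9; 9; 9], 3));
((0,1,7,2), ([:: 3; 7; 7; 7; 7; 7; 7; 9; 9; 7], 7));
((0,1,8,1), ([:: 3; 7; 7; 7; 7; 9; 7; 7; 7; 7], 13));
((0,1,9,0), ([:: 3; 7; 7; 7; 7; 7; 7; 7; 7; 7], 3));
((0,2,0,8), ([:: 3; 3; 9; 9; 9; 9; 9; 9; 9; 9], 3));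
((0,2,1,7), ([:: 3; 3; 9; 9; 9; 7; 9; 9; 9; 9], 13));
((0,2,2,6), ([:: 3; 3; 7; 7; 9; 9; 9; 9; 9; 9], 11));
((0,2,3,5), ([:: 3; 3; 7; 7; 7; 9; 9; 9; 9; 9], 3));
((0,2,4,4), ([:: 3; 3; 7; 7; 7; 7; 9; 9; 9; 9], 11));
((0,2,5,3), ([:: 3; 3; 7; 7; 7; 7; 9; 9; 7; 9], 7));
((0,2,6,2), ([:: 3; 3; 7; 7; 7; 7; 7; 7; 9; 9], 3));
((0,2,7,1), ([:: 3; 3; 7; 7; 7; 7; 7; 9; 7; 7], 7));
((0,2,8,0), ([:: 3; 3; 7; 7; 7; 7; 7; 7; 7; 7], 11));
((0,3,0,7), ([:: 3; 3; 3; 9; 9; 9; 9; 9; 9; 9], 3));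
((0,3,1,6), ([:: 3; 3; 3; 9; 9; 9; 7; 9; 9; 9], 13));
((0,3,2,5), ([:: 3; 3; 3; 7; 9; 9; 7; 9; 9; 9], 7));
((0,3,3,4), ([:: 3; 3; 3; 7; 7; 7; 9; 9; 9; 9], 3));
((0,3,4,3), ([:: 3; 3; 3; 7; 7; 9; 7; 7; 9; 9], 7));
((0,3,5,2), ([:: 3; 3; 3; 7; 7; 7; 9; 7; 9; 7], 11));
((0,3,6,1), ([:: 3; 3; 3; 7; 7; 7; 7; 7; 7; 9], 3));
((0,3,7,0), ([:: 3; 3; 7; 7; 7; 7; 3; 7; 7; 7], 7));
((0,4,0,6), ([:: 3; 3; 3; 3; 9; 9; 9; 9; 9; 9], 3));
((0,4,1,5), ([:: 3; 3; 3; 3; 9; 7; 9; 9; 9; 9], 7));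
((0,4,2,4), ([:: 3; 3; 3; 3; 7; 7; 9; 9; 9; 9], 11));
((0,4,3,3), ([:: 3; 3; 3; 3; 7; 7; 7; 9; 9; 9], 3));
((0,4,4,2), ([:: 3; 3; 3; 3; 7; 7; 7; 7; 9; 9], 11));
((0,4,5,1), ([:: 3; 3; 3; 3; 7; 7; 7; 7; 9; 7], 7));
((0,4,6,0), ([:: 3; 3; 3; 3; 7; 7; 7; 7; 7; 7], 3));
((0,5,0,5), ([:: 3; 3; 3; 3; 3; 9; 9; 9; 9; 9], 3));
((0,5,1,4), ([:: 3; 3; 3; 3; 3; 9; 9; 9; 7; 9], 7));
((0,5,2,3), ([:: 3; 3; 3; 3; 3; 7; 7; 9; 9; 9], 7));
((0,5,3,2), ([:: 3; 3; 3; 3; 3; 7; 7; 7; 9; 9], 3));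
((0,5,4,1), ([:: 3; 3; 3; 3; 3; 7; 9; 7; 7; 7], 7));
((0,5,5,0), ([:: 3; 3; 3; 3; 7; 7; 7; 3; 7; 7], 7));
((0,6,0,4), ([:: 3; 3; 3; 3; 3; 3; 9; 9; 9; 9], 3));
((0,6,1,3), ([:: 3; 3; 3; 3; 3; 3; 9; 9; 9; 7], 13));
((0,6,2,2), ([:: 3; 3; 3; 3; 3; 3; 7; 7; 9; 9], 11));
((0,6,3,1), ([:: 3; 3; 3; 3; 3; 3; 7; 7; 7; 9], 3));
((0,6,4,0), ([:: 3; 3; 3; 3; 3; 3; 7; 7; 7; 7], 7));
((0,7,0,3), ([:: 3; 3; 3; 3; 3; 3; 3; 9; 9; 9], 3));
((0,7,1,2), ([:: 3; 3; 3; 3; 3; 3; 3; 9; 9; 7], 7));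
((0,7,2,1), ([:: 3; 3; 3; 3; 3; 3; 7; 3; 9; 7], 13));
((0,7,3,0), ([:: 3; 3; 3; 3; 3; 3; 3; 7; 7; 7], 3));
((0,8,0,2), ([:: 3; 3; 3; 3; 3; 3; 3; 3; 9; 9], 3));
((0,8,1,1), ([:: 3; 3; 3; 3; 3; 3; 9; 3; 7; 3], 7));
((0,8,2,0), ([:: 3; 3; 3; 3; 3; 3; 3; 3; 7; 7], 11));
((0,9,0,1), ([:: 3; 3; 3; 3; 3; 3; 3; 3; 3; 9], 3));
((0,9,1,0), ([:: 3; 3; 3; 3; 7; 3; 3; 3; 3; 3], 7));
((0,10,0,0), ([:: 3; 3; 3; 3; 3; 3; 3; 3; 3; 3], 3));
((1,0,0,9), ([:: 9; 9; 1; 9; 9; 9; 9; 9; 9; 9], 7));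
((1,0,1,8), ([:: 1; 7; 9; 9; 9; 9; 9; 9; 9; 9], 7));
((1,0,2,7), ([:: 1; 7; 7; 9; 9; 9; 9; 9; 9; 9], 3));
((1,0,3,6), ([:: 1; 7; 7; 9; 9; 7; 9; 9; 9; 9], 7));
((1,0,4,5), ([:: 1; 7; 7; 7; 9; 9; 9; 9; 7; 9], 7));
((1,0,5,4), ([:: 1; 7; 7; 7; 7; 7; 9; 9; 9; 9], 3));
((1,0,6,3), ([:: 1; 7; 7; 7; 7; 7; 9; 9; 9; 7], 7));
((1,0,7,2), ([:: 1; 7; 7; 7; 7; 7; 7; 7; 9; 9], 7));
((1,0,8,1), ([:: 1; 7; 7; 7; 7; 7; 7; 7; 7; 9], 3));
((1,0,9,0), ([:: 7; 7; 7; 7; 7; 7; 7; 1; 7; 7], 29));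
((1,1,0,8), ([:: 1; 9; 3; 9; 9; 9; 9; 9; 9; 9], 7));
((1,1,1,7), ([:: 1; 3; 7; 9; 9; 9; 9; 9; 9; 9], 7));
((1,1,2,6), ([:: 1; 3; 7; 7; 9; 9; 9; 9; 9; 9], 3));
((1,1,3,5), ([:: 1; 3; 7; 7; 9; 7; 9; 9; 9; 9], 11));
((1,1,4,4), ([:: 1; 3; 7; 7; 7; 9; 9; 9; 9; 7], 7));
((1,1,5,3), ([:: 1; 3; 7; 7; 7; 7; 7; 9; 9; 9], 3));
((1,1,6,2), ([:: 1; 3; 7; 7; 7; 7; 9; 9; 7; 7], 7));
((1,1,7,1), ([:: 1; 3; 7; 7; 7; 7; 7; 7; 7; 9], 7));
((1,1,8,0), ([:: 1; 3; 7; 7; 7; 7; 7; 7; 7; 7], 3));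
((1,2,0,7), ([:: 1; 3; 3; 9; 9; 9; 9; 9; 9; 9], 13));
((1,2,1,6), ([:: 1; 3; 3; 7; 9; 9; 9; 9; 9; 9], 7));
((1,2,2,5), ([:: 1; 3; 3; 7; 7; 9; 9; 9; 9; 9], 3));
((1,2,3,4), ([:: 1; 3; 3; 7; 7; 9; 9; 7; 9; 9], 7));
((1,2,4,3), ([:: 1; 3; 3; 7; 7; 9; 7; 7; 9; 9], 13));
((1,2,5,2), ([:: 1; 3; 3; 7; 7; 7; 7; 7; 9; 9], 3));
((1,2,6,1), ([:: 1; 3; 3; 7; 7; 7; 7; 7; 7; 9], 13));
((1,2,7,0), ([:: 1; 3; 3; 7; 7; 7; 7; 7; 7; 7], 7));
((1,3,0,6), ([:: 1; 3; 3; 9; 3; 9; 9; 9; 9; 9], 7));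
((1,3,1,5), ([:: 1; 3; 3; 3; 7; 9; 9; 9; 9; 9], 7));
((1,3,2,4), ([:: 1; 3; 3; 3; 7; 7; 9; 9; 9; 9], 3));
((1,3,3,3), ([:: 1; 3; 3; 3; 7; 7; 9; 7; 9; 9], 11));
((1,3,4,2), ([:: 1; 3; 3; 3; 7; 7; 9; 7; 9; 7], 7));
((1,3,5,1), ([:: 1; 3; 3; 3; 7; 7; 7; 7; 7; 9], 3));
((1,3,6,0), ([:: 1; 3; 7; 3; 7; 7; 7; 3; 7; 7], 7));
((1,4,0,5), ([:: 1; 3; 3; 3; 9; 3; 9; 9; 9; 9], 7));
((1,4,1,4), ([:: 1; 3; 3; 3; 3; 7; 9; 9; 9; 9], 7));
((1,4,2,3), ([:: 1; 3; 3; 3; 3; 7; 7; 9; 9; 9], 3));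
((1,4,3,2), ([:: 1; 3; 3; 3; 3; 7; 7; 7; 9; 9], 13));
((1,4,4,1), ([:: 1; 3; 3; 3; 7; 3; 7; 7; 7; 9], 11));
((1,4,5,0), ([:: 1; 3; 3; 3; 3; 7; 7; 7; 7; 7], 3));
((1,5,0,4), ([:: 1; 3; 3; 3; 3; 9; 3; 9; 9; 9], 7));
((1,5,1,3), ([:: 1; 3; 3; 3; 3; 3; 7; 9; 9; 9], 7));
((1,5,2,2), ([:: 1; 3; 3; 3; 3; 3; 7; 7; 9; 9], 3));
((1,5,3,1), ([:: 1; 3; 3; 3; 3; 3; 7; 7; 9; 7], 11));
((1,5,4,0), ([:: 1; 3; 3; 3; 3; 7; 7; 7; 7; 3], 7));
((1,6,0,3), ([:: 1; 3; 3; 3; 3; 3; 9; 3; 9; 9], 7));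
((1,6,1,2), ([:: 1; 3; 3; 3; 3; 3; 3; 7; 9; 9], 7));
((1,6,2,1), ([:: 1; 3; 3; 3; 3; 3; 3; 7; 7; 9], 3));
((1,6,3,0), ([:: 1; 3; 3; 3; 3; 7; 3; 3; 7; 7], 7));
((1,7,0,2), ([:: 1; 3; 3; 3; 3; 3; 3; 9; 3; 9], 7));
((1,7,1,1), ([:: 1; 3; 3; 3; 3; 3; 3; 3; 7; 9], 7));
((1,7,2,0), ([:: 1; 3; 3; 3; 3; 3; 3; 3; 7; 7], 3));
((1,8,0,1), ([:: 1; 3; 3; 3; 3; 3; 3; 3; 3; 9], 13));
((1,8,1,0), ([:: 1; 3; 3; 3; 3; 3; 3; 3; 3; 7], 7));
((1,9,0,0), ([:: 3; 1; 3; 3; 3; 3; 3; 3; 3; 3], 13));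
((2,0,0,8), ([:: 1; 1; 9; 9; 9; 9; 9; 9; 9; 9], 11));
((2,0,1,7), ([:: 1; 1; 7; 9; 9; 9; 9; 9; 9; 9], 3));
((2,0,2,6), ([:: 1; 1; 7; 7; 9; 9; 9; 9; 9; 9], 11));
((2,0,3,5), ([:: 1; 1; 7; 7; 9; 7; 9; 9; 9; 9], 7));
((2,0,4,4), ([:: 1; 1; 7; 7; 7; 7; 9; 9; 9; 9], 3));
((2,0,5,3), ([:: 1; 1; 7; 7; 7; 7; 9; 7; 9; 9], 7));
((2,0,6,2), ([:: 1; 1; 7; 7; 7; 7; 7; 7; 9; 9], 11));
((2,0,7,1), ([:: 1; 1; 7; 7; 7; 7; 7; 7; 7; 9], 3));
((2,0,8,0), ([:: 1; 1; 7; 7; 7; 7; 7; 7; 7; 7], 11));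
((2,1,0,7), ([:: 1; 1; 9; 9; 3; 9; 9; 9; 9; 9], 7));
((2,1,1,6), ([:: 1; 1; 3; 7; 9; 9; 9; 9; 9; 9], 3));
((2,1,2,5), ([:: 1; 1; 3; 7; 7; 9; 9; 9; 9; 9], 7));
((2,1,3,4), ([:: 1; 1; 3; 7; 7; 9; 7; 9; 9; 9], 13));
((2,1,4,3), ([:: 1; 1; 3; 7; 7; 7; 7; 9; 9; 9], 3));
((2,1,5,2), ([:: 1; 1; 3; 7; 7; 7; 7; 9; 7; 9], 13));
((2,1,6,1), ([:: 1; 1; 3; 7; 7; 7; 7; 7; 9; 7], 13));
((2,1,7,0), ([:: 1; 1; 3; 7; 7; 7; 7; 7; 7; 7], 3));
((2,2,0,6), ([:: 1; 1; 3; 3; 9; 9; 9; 9; 9; 9], 11));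
((2,2,1,5), ([:: 1; 1; 3; 3; 7; 9; 9; 9; 9; 9], 3));
((2,2,2,4), ([:: 1; 1; 3; 3; 7; 7; 9; 9; 9; 9], 11));
((2,2,3,3), ([:: 1; 1; 3; 3; 7; 7; 9; 9; 9; 7], 7));
((2,2,4,2), ([:: 1; 1; 3; 3; 7; 7; 7; 7; 9; 9], 3));
((2,2,5,1), ([:: 1; 1; 3; 3; 7; 7; 9; 7; 7; 7], 13));
((2,2,6,0), ([:: 1; 1; 3; 3; 7; 7; 7; 7; 7; 7], 11));
((2,3,0,5), ([:: 1; 1; 3; 3; 9; 9; 9; 3; 9; 9], 13));
((2,3,1,4), ([:: 1; 1; 3; 3; 3; 7; 9; 9; 9; 9], 3));
((2,3,2,3), ([:: 1; 1; 3; 3; 3; 7; 7; 9; 9; 9], 13));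
((2,3,3,2), ([:: 1; 1; 3; 3; 3; 7; 9; 7; 7; 9], 7));
((2,3,4,1), ([:: 1; 1; 3; 3; 3; 7; 7; 7; 7; 9], 3));
((2,3,5,0), ([:: 1; 1; 3; 3; 3; 7; 7; 7; 7; 7], 7));
((2,4,0,4), ([:: 1; 1; 3; 3; 3; 3; 9; 9; 9; 9], 11));
((2,4,1,3), ([:: 1; 1; 3; 3; 3; 3; 7; 9; 9; 9], 3));
((2,4,2,2), ([:: 1; 1; 3; 3; 3; 3; 7; 7; 9; 9], 11));
((2,4,3,1), ([:: 1; 1; 3; 3; 3; 3; 7; 7; 7; 9], 7));
((2,4,4,0), ([:: 1; 1; 3; 3; 3; 3; 7; 7; 7; 7], 3));
((2,5,0,3), ([:: 1; 1; 3; 3; 3; 3; 3; 9; 9; 9], 7));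
((2,5,1,2), ([:: 1; 1; 3; 3; 3; 3; 3; 7; 9; 9], 3));
((2,5,2,1), ([:: 1; 1; 3; 3; 3; 3; 7; 7; 9; 3], 7));
((2,5,3,0), ([:: 1; 1; 3; 3; 3; 3; 7; 7; 3; 7], 7));
((2,6,0,2), ([:: 1; 1; 3; 3; 3; 3; 3; 3; 9; 9], 11));
((2,6,1,1), ([:: 1; 1; 3; 3; 3; 3; 3; 3; 7; 9], 3));
((2,6,2,0), ([:: 1; 1; 3; 3; 3; 3; 3; 3; 7; 7], 11));
((2,7,0,1), ([:: 1; 1; 3; 3; 3; 3; 9; 3; 3; 3], 7));
((2,7,1,0), ([:: 1; 1; 3; 3; 3; 3; 3; 3; 3; 7], 3));
((2,8,0,0), ([:: 1; 1; 3; 3; 3; 3; 3; 3; 3; 3], 11));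
((3,0,0,7), ([:: 1; 1; 1; 9; 9; 9; 9; 9; 9; 9], 3));
((3,0,1,6), ([:: 1; 1; 1; 9; 9; 9; 9; 9; 7; 9], 7));
((3,0,2,5), ([:: 1; 1; 1; 7; 9; 9; 9; 7; 9; 9], 7));
((3,0,3,4), ([:: 1; 1; 1; 7; 7; 7; 9; 9; 9; 9], 3));
((3,0,4,3), ([:: 1; 1; 1; 7; 7; 7; 7; 9; 9; 9], 13));
((3,0,5,2), ([:: 1; 1; 1; 7; 7; 7; 7; 9; 9; 7], 7));
((3,0,6,1), ([:: 1; 1; 1; 7; 7; 7; 7; 7; 7; 9], 3));
((3,0,7,0), ([:: 1; 1; 7; 7; 7; 7; 1; 7; 7; 7], 7));
((3,1,0,6), ([:: 1; 1; 1; 3; 9; 9; 9; 9; 9; 9], 3));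
((3,1,1,5), ([:: 1; 1; 1; 3; 7; 9; 9; 9; 9; 9], 13));
((3,1,2,4), ([:: 1; 1; 1; 3; 7; 9; 9; 7; 9; 9], 7));
((3,1,3,3), ([:: 1; 1; 1; 3; 7; 7; 7; 9; 9; 9], 3));
((3,1,4,2), ([:: 1; 1; 1; 3; 7; 7; 9; 7; 7; 9], 7));
((3,1,5,1), ([:: 1; 1; 1; 3; 7; 7; 7; 7; 9; 7], 11));
((3,1,6,0), ([:: 1; 1; 1; 3; 7; 7; 7; 7; 7; 7], 3));
((3,2,0,5), ([:: 1; 1; 1; 3; 3; 9; 9; 9; 9; 9], 3));
((3,2,1,4), ([:: 1; 1; 1; 3; 3; 9; 7; 9; 9; 9], 7));
((3,2,2,3), ([:: 1; 1; 1; 3; 3; 7; 9; 7; 9; 9], 7));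
((3,2,3,2), ([:: 1; 1; 1; 3; 3; 7; 7; 7; 9; 9], 3));
((3,2,4,1), ([:: 1; 1; 1; 3; 3; 7; 7; 7; 9; 7], 7));
((3,2,5,0), ([:: 1; 1; 1; 7; 3; 7; 3; 7; 7; 7], 13));
((3,3,0,4), ([:: 1; 1; 1; 3; 3; 3; 9; 9; 9; 9], 3));
((3,3,1,3), ([:: 1; 1; 1; 3; 3; 3; 9; 7; 9; 9], 11));
((3,3,2,2), ([:: 1; 1; 1; 3; 3; 3; 7; 7; 9; 9], 7));
((3,3,3,1), ([:: 1; 1; 1; 3; 3; 3; 7; 7; 7; 9], 3));
((3,3,4,0), ([:: 1; 1; 1; 3; 3; 7; 7; 3; 7; 7], 7));
((3,4,0,3), ([:: 1; 1; 1; 3; 3; 3; 3; 9; 9; 9], 3));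
((3,4,1,2), ([:: 1; 1; 1; 3; 3; 3; 7; 9; 3; 9], 7));
((3,4,2,1), ([:: 1; 1; 1; 3; 3; 3; 3; 9; 7; 7], 7));
((3,4,3,0), ([:: 1; 1; 1; 3; 3; 3; 3; 7; 7; 7], 3));
((3,5,0,2), ([:: 1; 1; 1; 3; 3; 3; 3; 3; 9; 9], 3));
((3,5,1,1), ([:: 1; 1; 1; 3; 3; 3; 3; 3; 9; 7], 11));
((3,5,2,0), ([:: 1; 1; 1; 3; 3; 3; 3; 3; 7; 7], 13));
((3,6,0,1), ([:: 1; 1; 1; 3; 3; 3; 3; 3; 3; 9], 3));
((3,6,1,0), ([:: 1; 1; 3; 1; 3; 3; 7; 3; 3; 3], 7));
((3,7,0,0), ([:: 1; 1; 1; 3; 3; 3; 3; 3; 3; 3], 3));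
((4,0,0,6), ([:: 1; 1; 1; 1; 9; 9; 9; 9; 9; 9], 11));
((4,0,1,5), ([:: 1; 1; 1; 1; 9; 7; 9; 9; 9; 9], 13));
((4,0,2,4), ([:: 1; 1; 1; 1; 7; 7; 9; 9; 9; 9], 3));
((4,0,3,3), ([:: 1; 1; 1; 1; 7; 7; 9; 7; 9; 9], 13));
((4,0,4,2), ([:: 1; 1; 1; 1; 7; 7; 7; 7; 9; 9], 11));
((4,0,5,1), ([:: 1; 1; 1; 1; 7; 7; 7; 7; 7; 9], 3));
((4,0,6,0), ([:: 1; 1; 1; 1; 7; 7; 7; 7; 7; 7], 11));
((4,1,0,5), ([:: 1; 1; 1; 1; 9; 9; 9; 3; 9; 9], 7));
((4,1,1,4), ([:: 1; 1; 1; 1; 9; 3; 9; 9; 9; 7], 7));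
((4,1,2,3), ([:: 1; 1; 1; 1; 3; 7; 7; 9; 9; 9], 3));
((4,1,3,2), ([:: 1; 1; 1; 1; 3; 7; 7; 7; 9; 9], 7));
((4,1,4,1), ([:: 1; 1; 1; 1; 3; 9; 7; 7; 7; 7], 7));
((4,1,5,0), ([:: 1; 1; 1; 1; 3; 7; 7; 7; 7; 7], 3));
((4,2,0,4), ([:: 1; 1; 1; 1; 3; 3; 9; 9; 9; 9], 7));
((4,2,1,3), ([:: 1; 1; 1; 1; 3; 7; 9; 3; 9; 9], 13));
((4,2,2,2), ([:: 1; 1; 1; 1; 3; 3; 7; 7; 9; 9], 3));
((4,2,3,1), ([:: 1; 1; 1; 1; 3; 7; 3; 9; 7; 7], 7));
((4,2,4,0), ([:: 1; 1; 1; 1; 3; 3; 7; 7; 7; 7], 11));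
((4,3,0,3), ([:: 1; 1; 1; 1; 3; 9; 9; 3; 9; 3], 13));
((4,3,1,2), ([:: 1; 1; 1; 1; 3; 3; 3; 9; 7; 9], 7));
((4,3,2,1), ([:: 1; 1; 1; 1; 3; 3; 3; 7; 7; 9], 3));
((4,3,3,0), ([:: 1; 1; 1; 1; 3; 3; 7; 7; 7; 3], 7));
((4,4,0,2), ([:: 1; 1; 1; 1; 3; 3; 3; 3; 9; 9], 11));
((4,4,1,1), ([:: 1; 1; 1; 1; 3; 3; 3; 3; 7; 9], 13));
((4,4,2,0), ([:: 1; 1; 1; 1; 3; 3; 3; 3; 7; 7], 3));
((4,5,0,1), ([:: 1; 1; 1; 1; 3; 3; 9; 3; 3; 3], 13));
((4,5,1,0), ([:: 1; 1; 1; 1; 3; 7; 3; 3; 3; 3], 7));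
((4,6,0,0), ([:: 1; 1; 1; 1; 3; 3; 3; 3; 3; 3], 11));
((5,0,0,5), ([:: 1; 1; 1; 1; 1; 9; 9; 9; 9; 9], 7));
((5,0,1,4), ([:: 1; 1; 1; 1; 1; 7; 9; 9; 9; 9], 3));
((5,0,2,3), ([:: 1; 1; 1; 1; 1; 7; 9; 9; 7; 9], 7));
((5,0,3,2), ([:: 1; 1; 1; 1; 1; 7; 9; 7; 9; 7], 7));
((5,0,4,1), ([:: 1; 1; 1; 1; 1; 7; 7; 7; 7; 9], 3));
((5,0,5,0), ([:: 1; 1; 1; 1; 7; 7; 7; 1; 7; 7], 7));
((5,1,0,4), ([:: 1; 1; 1; 1; 3; 9; 9; 9; 1; 9], 7));
((5,1,1,3), ([:: 1; 1; 1; 1; 1; 3; 7; 9; 9; 9], 3));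
((5,1,2,2), ([:: 1; 1; 1; 1; 1; 3; 7; 9; 7; 9], 7));
((5,1,3,1), ([:: 1; 1; 1; 1; 1; 3; 7; 7; 9; 7], 7));
((5,1,4,0), ([:: 1; 1; 1; 1; 1; 3; 7; 7; 7; 7], 3));
((5,2,0,3), ([:: 1; 1; 1; 1; 1; 3; 9; 9; 3; 9], 7));
((5,2,1,2), ([:: 1; 1; 1; 1; 1; 3; 3; 7; 9; 9], 3));
((5,2,2,1), ([:: 1; 1; 1; 1; 1; 3; 3; 7; 7; 9], 7));
((5,2,3,0), ([:: 1; 1; 1; 1; 1; 3; 3; 7; 7; 7], 13));
((5,3,0,2), ([:: 1; 1; 1; 1; 1; 3; 9; 3; 9; 3], 7));
((5,3,1,1), ([:: 1; 1; 1; 1; 1; 3; 3; 3; 7; 9], 3));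
((5,3,2,0), ([:: 1; 1; 1; 1; 1; 3; 3; 7; 3; 7], 7));
((5,4,0,1), ([:: 1; 1; 1; 1; 1; 3; 3; 9; 3; 3], 7));
((5,4,1,0), ([:: 1; 1; 1; 1; 1; 3; 3; 3; 3; 7], 3));
((5,5,0,0), ([:: 1; 1; 1; 1; 3; 1; 3; 3; 3; 3], 13));
((6,0,0,4), ([:: 1; 1; 1; 1; 1; 1; 9; 9; 9; 9], 3));
((6,0,1,3), ([:: 1; 1; 1; 1; 1; 1; 9; 9; 9; 7], 13));
((6,0,2,2), ([:: 1; 1; 1; 1; 1; 1; 7; 7; 9; 9], 11));
((6,0,3,1), ([:: 1; 1; 1; 1; 1; 1; 7; 7; 7; 9], 3));
((6,0,4,0), ([:: 1; 1; 1; 1; 1; 1; 7; 7; 7; 7], 7));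
((6,1,0,3), ([:: 1; 1; 1; 1; 1; 1; 3; 9; 9; 9], 3));
((6,1,1,2), ([:: 1; 1; 1; 1; 1; 1; 3; 9; 9; 7], 7));
((6,1,2,1), ([:: 1; 1; 1; 1; 1; 1; 7; 3; 9; 7], 13));
((6,1,3,0), ([:: 1; 1; 1; 1; 1; 1; 3; 7; 7; 7], 3));
((6,2,0,2), ([:: 1; 1; 1; 1; 1; 1; 3; 3; 9; 9], 3));
((6,2,1,1), ([:: 1; 1; 1; 1; 1; 1; 9; 3; 7; 3], 7));
((6,2,2,0), ([:: 1; 1; 1; 1; 1; 1; 3; 3; 7; 7], 11));
((6,3,0,1), ([:: 1; 1; 1; 1; 1; 1; 3; 3; 3; 9], 3));
((6,3,1,0), ([:: 1; 1; 1; 1; 1; 3; 1; 3; 7; 3], 11));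
((6,4,0,0), ([:: 1; 1; 1; 1; 1; 1; 3; 3; 3; 3], 3));
((7,0,0,3), ([:: 1; 1; 1; 1; 1; 1; 9; 9; 1; 9], 7));
((7,0,1,2), ([:: 1; 1; 1; 1; 1; 1; 1; 7; 9; 9], 7));
((7,0,2,1), ([:: 1; 1; 1; 1; 1; 1; 1; 7; 7; 9], 3));
((7,0,3,0), ([:: 1; 1; 1; 1; 1; 7; 7; 1; 7; 1], 13));
((7,1,0,2), ([:: 1; 1; 1; 1; 1; 1; 1; 9; 3; 9], 7));
((7,1,1,1), ([:: 1; 1; 1; 1; 1; 1; 1; 3; 7; 9], 7));
((7,1,2,0), ([:: 1; 1; 1; 1; 1; 1; 1; 3; 7; 7], 3));
((7,2,0,1), ([:: 1; 1; 1; 1; 1; 1; 1; 3; 3; 9], 13));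
((7,2,1,0), ([:: 1; 1; 1; 1; 1; 1; 1; 3; 3; 7], 7));
((7,3,0,0), ([:: 1; 1; 1; 1; 1; 1; 3; 1; 3; 3], 13));
((8,0,0,2), ([:: 1; 1; 1; 1; 1; 1; 1; 1; 9; 9], 11));
((8,0,1,1), ([:: 1; 1; 1; 1; 1; 1; 1; 1; 7; 9], 3));
((8,0,2,0), ([:: 1; 1; 1; 1; 1; 1; 1; 1; 7; 7], 11));
((8,1,0,1), ([:: 1; 1; 1; 1; 1; 1; 1; 3; 9; 1], 13));
((8,1,1,0), ([:: 1; 1; 1; 1; 1; 1; 1; 1; 3; 7], 3));
((8,2,0,0), ([:: 1; 1; 1; 1; 1; 1; 1; 1; 3; 3], 11));
((9,0,0,1), ([:: 1; 1; 1; 1; 1; 1; 1; 1; 1; 9], 3));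
((9,0,1,0), ([:: 1; 1; 1; 1; 1; 1; 7; 1; 1; 1], 13));
((9,1,0,0), ([:: 1; 1; 1; 1; 1; 1; 1; 1; 1; 3], 3));
((10,0,0,0), ([:: 1; 1; 1; 1; 1; 1; 1; 1; 1; 1], 11))].

Lemma big_check : tabok table.
Proof. vm_compute. reflexivity. Qed.

Theorem mainTheorem2 (N : nat) (hN4 : 4 <= N) (hN10 : N <= 10) :
  ~ exists d : 'I_N -> nat,
      (forall i, d i < 10) /\
      (exists h0 : 0 < N, d (Ordinal h0) != 0) /\
      (forall s : 'S_N, prime (digits_value (fun i => d (s i)))).
Proof. exact: (@main_from N hN4 hN10 table big_check). Qed.
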